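(* Let $n\ge2$, let $I\subseteq[0,\infty)$ be an interval with non-empty interior, let $\tilde{\mathbf{P}}\colon I\to\mathbb{R}^n$ be a generalized $n$-system and let $\epsilon>0$. Then there exists an $n$-system $\mathbf{P}$ on $I$ such that $\|\tilde{\mathbf{P}}(q)-\mathbf{P}(q)\|_\infty\le\epsilon$ for every $q\in I$.
   Context: Let $I\subseteq[0,\infty)$ be an interval with non-empty interior. A map $\mathbf{P}\colon I\to\mathbb{R}^n$ is continuous piecewise linear if it is continuous, the set $D$ of points of $I$ where it is not differentiable (including the endpoints of $I$ that lie in $I$) is discrete in $I$, and its derivative is locally constant on $I\setminus D$. An $n$-system on $I$ is a continuous piecewise linear map $\mathbf{P}=(P_1,\dots,P_n)\colon I\to\mathbb{R}^n$ such that: (S1) for each $q\in I$, $0\le P_1(q)\le\cdots\le P_n(q)$ and $P_1(q)+\cdots+P_n(q)=q$; (S2) on each non-empty open subinterval $H$ of $I$ on which $\mathbf{P}$ is differentiable, there is $r\in\{1,\dots,n\}$ such that $P_r$ has slope $1$ on $H$ and all $P_j$ with $j\ne r$ are constant on $H$; (S3) if $q$ is an interior point of $I$ where $\mathbf{P}$ is not differentiable and the integers $r,s$ with $P_r'(q^-)=P_s'(q^+)=1$ satisfy $r<s$, then $P_r(q)=P_{r+1}(q)=\cdots=P_s(q)$. A generalized $n$-system on $I$ is a continuous piecewise linear map $\mathbf{P}=(P_1,\dots,P_n)\colon I\to\mathbb{R}^n$ such that: (G1) for each $q\in I$, $0\le P_1(q)\le\cdots\le P_n(q)$ and $P_1(q)+\cdots+P_n(q)=q$;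 (G2) on each non-empty open subinterval $H$ of $I$ on which $\mathbf{P}$ is differentiable, there are integers $1\le \underline{r}\le\overline{r}\le n$ such that $P_{\underline r},\dots,P_{\overline r}$ coincide on $H$ and have slope $1/(\overline r-\underline r+1)$, while every other $P_j$ is constant on $H$; (G3) if $q$ is an interior point of $I$ where $\mathbf{P}$ is not differentiable, and $\underline r,\overline r,\underline s,\overline s$ are the integers with $P_j'(q^-)=1/(\overline r-\underline r+1)$ for $\underline r\le j\le\overline r$ and $P_j'(q^+)=1/(\overline s-\underline s+1)$ for $\underline s\le j\le \overline s$ (as in (G2) on the adjacent intervals), and if $\underline r<\overline s$, then $P_{\underline r}(q)=P_{\underline r+1}(q)=\cdots=P_{\overline s}(q)$. *)

(* Defs.v *)
From Stdlib Require Import Reals Lra List.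
Open Scope R_scope.

(* A map I -> R^n is represented by P : nat -> R -> R, where P j q is the
   j-th coordinate P_j(q); only indices 1 <= j <= n and arguments q in I
   are relevant. Subsets of R are predicates R -> Prop. *)

Definition is_interval (I : R -> Prop) : Prop :=
  forall x y z, I x -> I z -> x <= y <= z -> I y.

Definition interior_pt (I : R -> Prop) (q : R) : Prop :=
  exists d, d > 0 /\ forall x, Rabs (x - q) < d -> I x.

Definition admissible_interval (I : R -> Prop) : Prop :=
  is_interval I /\ (forall x, I x -> 0 <= x) /\ exists q, interior_pt I q.

Definition open_subinterval (I H : R -> Prop) : Prop :=
  is_interval H /\ (exists x, H x) /\ (forall x, H x -> interior_pt H x)
  /\ (forall x, H x -> I x).

Definition diff_at (n : nat) (P : nat -> R -> R) (q : R) : Prop :=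
  forall j, (1 <= j <= n)%nat -> exists l, derivable_pt_lim (P j) q l.

Definition nondiff_set (n : nat) (I : R -> Prop) (P : nat -> R -> R) (q : R)
  : Prop := I q /\ (~ interior_pt I q \/ ~ diff_at n P q).

Definition continuous_on (n : nat) (I : R -> Prop) (P : nat -> R -> R) : Prop :=
  forall j q, (1 <= j <= n)%nat -> I q ->
    forall eps, eps > 0 -> exists d, d > 0 /\
      forall x, I x -> Rabs (x - q) < d -> Rabs (P j x - P j q) < eps.

Definition discrete_in (I D : R -> Prop) : Prop :=
  forall q, I q -> exists d, d > 0 /\ exists l : list R,
    forall x, I x -> D x -> Rabs (x - q) < d -> In x l.

Definition cont_pw_linear (n : nat) (I : R -> Prop) (P : nat -> R -> R) : Prop :=
  continuous_on n I P /\
  discrete_in I (nondiff_set n I P) /\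
  (forall q, I q -> ~ nondiff_set n I P q ->
     exists d, d > 0 /\ forall q', I q' -> ~ nondiff_set n I P q' ->
       Rabs (q' - q) < d ->
       forall j l l', (1 <= j <= n)%nat ->
         derivable_pt_lim (P j) q l -> derivable_pt_lim (P j) q' l' -> l = l').

Definition slope_on (H : R -> Prop) (f : R -> R) (c : R) : Prop :=
  forall x y, H x -> H y -> f y - f x = c * (y - x).

Definition const_on (H : R -> Prop) (f : R -> R) : Prop :=
  forall x y, H x -> H y -> f x = f y.

Definition left_deriv (f : R -> R) (q l : R) : Prop :=
  forall eps, eps > 0 -> exists d, d > 0 /\
    forall x, q - d < x < q -> Rabs ((f x - f q) / (x - q) - l) < eps.
Definition right_deriv (f : R -> R) (q l : R) : Prop :=
  forall eps, eps > 0 -> exists d, d > 0 /\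
    forall x, q < x < q + d -> Rabs ((f x - f q) / (x - q) - l) < eps.

Definition cond1 (n : nat) (I : R -> Prop) (P : nat -> R -> R) : Prop :=
  forall q, I q ->
    0 <= P 1%nat q /\
    (forall j, (1 <= j < n)%nat -> P j q <= P (S j) q) /\
    sum_f 1 n (fun j => P j q) = q.

Definition n_system (n : nat) (I : R -> Prop) (P : nat -> R -> R) : Prop :=
  cont_pw_linear n I P /\
  cond1 n I P /\
  (forall H, open_subinterval I H -> (forall x, H x -> diff_at n P x) ->
     exists r, (1 <= r <= n)%nat /\ slope_on H (P r) 1 /\
       forall j, (1 <= j <= n)%nat -> j <> r -> const_on H (P j)) /\
  (forall q, interior_pt I q -> ~ diff_at n P q ->
     forall r s, (1 <= r <= n)%nat -> (1 <= s <= n)%nat ->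
       left_deriv (P r) q 1 -> right_deriv (P s) q 1 -> (r < s)%nat ->
       forall j, (r <= j <= s)%nat -> P j q = P r q).

Definition gen_n_system (n : nat) (I : R -> Prop) (P : nat -> R -> R) : Prop :=
  cont_pw_linear n I P /\
  cond1 n I P /\
  (forall H, open_subinterval I H -> (forall x, H x -> diff_at n P x) ->
     exists rl rh, (1 <= rl <= rh)%nat /\ (rh <= n)%nat /\
       (forall j, (rl <= j <= rh)%nat ->
          (forall x, H x -> P j x = P rl x) /\
          slope_on H (P j) (1 / INR (rh - rl + 1))) /\
       (forall j, (1 <= j <= n)%nat -> ~ (rl <= j <= rh)%nat -> const_on H (P j))) /\
  (forall q, interior_pt I q -> ~ diff_at n P q ->
     forall rl rh sl sh,
       (1 <= rl <= rh)%nat -> (rh <= n)%nat ->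
       (1 <= sl <= sh)%nat -> (sh <= n)%nat ->
       (forall j, (rl <= j <= rh)%nat -> left_deriv (P j) q (1 / INR (rh - rl + 1))) ->
       (forall j, (1 <= j <= n)%nat -> ~ (rl <= j <= rh)%nat -> left_deriv (P j) q 0) ->
       (forall j, (sl <= j <= sh)%nat -> right_deriv (P j) q (1 / INR (sh - sl + 1))) ->
       (forall j, (1 <= j <= n)%nat -> ~ (sl <= j <= sh)%nat -> right_deriv (P j) q 0) ->
       (rl < sh)%nat ->
       forall j, (rl <= j <= sh)%nat -> P j q = P rl q).

(* Main.v *)
Require Import Defs.
From Stdlib Require Import Reals Lra Lia Classical ClassicalEpsilon ZArith List.
Open Scope R_scope.


Definition kd (j r : nat) : R := if Nat.eq_dec j r then 1 else 0.

Lemma kd_eq j : kd j j = 1.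
Proof. unfold kd; destruct (Nat.eq_dec j j); congruence. Qed.
Lemma kd_neq j r : j <> r -> kd j r = 0.
Proof. unfold kd; destruct (Nat.eq_dec j r); congruence. Qed.
Lemma kd_one j r : kd j r = 1 -> j = r.
Proof. unfold kd; destruct (Nat.eq_dec j r); auto. intros; lra. Qed.

Definition LeftInd (I : R -> Prop) (P : nat -> R -> R) (q : R) (r : nat) :=
  exists d, d > 0 /\ forall x, q - d < x <= q -> I x /\ forall j, P j x = P j q + kd j r * (x - q).
Definition RightInd (I : R -> Prop) (P : nat -> R -> R) (q : R) (r : nat) :=
  exists d, d > 0 /\ forall x, q <= x < q + d -> I x /\ forall j, P j x = P j q + kd j r * (x - q).

Lemma deriv_affine_loc f x c e : e > 0 ->
  (forall y, Rabs (y - x) < e -> f y = f x + c * (y - x)) -> derivable_pt_lim f x c.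
Proof.
  intros He H eps Heps. exists (mkposreal e He). intros h Hh0 Hh. simpl in Hh.
  rewrite (H (x + h)) by (replace (x + h - x) with h by ring; auto).
  replace ((f x + c * (x + h - x) - f x) / h - c) with 0.
  rewrite Rabs_R0; auto. field; auto.
Qed.

Lemma deriv_left_affine f q l c d : d > 0 -> derivable_pt_lim f q l ->
  (forall y, q - d < y <= q -> f y = f q + c * (y - q)) -> l = c.
Proof.
  intros Hd Hl H. destruct (Req_dec l c) as [|Hne]; auto. exfalso.
  assert (He : Rabs (l - c) / 2 > 0) by (apply Rdiv_lt_0_compat; [apply Rabs_pos_lt; lra|lra]).
  destruct (Hl _ He) as [del Hdel].
  set (h := - Rmin d del / 2).
  assert (Hm : 0 < Rmin d del) by (apply Rmin_glb_lt; [lra| apply cond_pos]).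
  assert (hn : h <> 0) by (unfold h; lra).
  assert (ha : Rabs h < del).
  { unfold h. rewrite Rabs_left by lra. pose proof (Rmin_r d del). lra. }
  specialize (Hdel h hn ha). rewrite (H (q + h)) in Hdel.
  2:{ unfold h; pose proof (Rmin_l d del); split; lra. }
  replace ((f q + c * (q + h - q) - f q) / h - l) with (c - l) in Hdel by (field; auto).
  rewrite Rabs_minus_sym in Hdel. pose proof (Rabs_pos (l - c)). lra.
Qed.

Lemma deriv_right_affine f q l c d : d > 0 -> derivable_pt_lim f q l ->
  (forall y, q <= y < q + d -> f y = f q + c * (y - q)) -> l = c.
Proof.
  intros Hd Hl H. destruct (Req_dec l c) as [|Hne]; auto. exfalso.
  assert (He : Rabs (l - c) / 2 > 0) by (apply Rdiv_lt_0_compat; [apply Rabs_pos_lt; lra|lra]).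
  destruct (Hl _ He) as [del Hdel].
  set (h := Rmin d del / 2).
  assert (Hm : 0 < Rmin d del) by (apply Rmin_glb_lt; [lra| apply cond_pos]).
  assert (hn : h <> 0) by (unfold h; lra).
  assert (ha : Rabs h < del).
  { unfold h. rewrite Rabs_right by lra. pose proof (Rmin_r d del). lra. }
  specialize (Hdel h hn ha). rewrite (H (q + h)) in Hdel.
  2:{ unfold h; pose proof (Rmin_l d del); split; lra. }
  replace ((f q + c * (q + h - q) - f q) / h - l) with (c - l) in Hdel by (field; auto).
  rewrite Rabs_minus_sym in Hdel. pose proof (Rabs_pos (l - c)). lra.
Qed.

Lemma left_deriv_affine f q l c d : d > 0 -> left_deriv f q l ->
  (forall y, q - d < y <= q -> f y = f q + c * (y - q)) -> l = c.
Proof.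
  intros Hd Hl H. destruct (Req_dec l c) as [|Hne]; auto. exfalso.
  assert (He : Rabs (l - c) / 2 > 0) by (apply Rdiv_lt_0_compat; [apply Rabs_pos_lt; lra|lra]).
  destruct (Hl _ He) as [del [Hdp Hdel]].
  set (x := q - Rmin d del / 2).
  assert (Hm : 0 < Rmin d del) by (apply Rmin_glb_lt; lra).
  pose proof (Rmin_l d del); pose proof (Rmin_r d del).
  specialize (Hdel x ltac:(unfold x; split; lra)). rewrite (H x) in Hdel.
  2:{ unfold x; split; lra. }
  replace ((f q + c * (x - q) - f q) / (x - q) - l) with (c - l) in Hdel by (field; unfold x; lra).
  rewrite Rabs_minus_sym in Hdel. pose proof (Rabs_pos (l - c)). lra.
Qed.

Lemma right_deriv_affine f q l c d : d > 0 -> right_deriv f q l ->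
  (forall y, q <= y < q + d -> f y = f q + c * (y - q)) -> l = c.
Proof.
  intros Hd Hl H. destruct (Req_dec l c) as [|Hne]; auto. exfalso.
  assert (He : Rabs (l - c) / 2 > 0) by (apply Rdiv_lt_0_compat; [apply Rabs_pos_lt; lra|lra]).
  destruct (Hl _ He) as [del [Hdp Hdel]].
  set (x := q + Rmin d del / 2).
  assert (Hm : 0 < Rmin d del) by (apply Rmin_glb_lt; lra).
  pose proof (Rmin_l d del); pose proof (Rmin_r d del).
  specialize (Hdel x ltac:(unfold x; split; lra)). rewrite (H x) in Hdel.
  2:{ unfold x; split; lra. }
  replace ((f q + c * (x - q) - f q) / (x - q) - l) with (c - l) in Hdel by (field; unfold x; lra).
  rewrite Rabs_minus_sym in Hdel. pose proof (Rabs_pos (l - c)). lra.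
Qed.

Lemma affine_left_deriv f q c d : d > 0 ->
  (forall y, q - d < y <= q -> f y = f q + c * (y - q)) -> left_deriv f q c.
Proof.
  intros Hd H eps He. exists d. split; auto. intros x Hx.
  rewrite H by lra. replace ((f q + c * (x - q) - f q) / (x - q) - c) with 0 by (field; lra).
  rewrite Rabs_R0; lra.
Qed.

Lemma affine_right_deriv f q c d : d > 0 ->
  (forall y, q <= y < q + d -> f y = f q + c * (y - q)) -> right_deriv f q c.
Proof.
  intros Hd H eps He. exists d. split; auto. intros x Hx.
  rewrite H by lra. replace ((f q + c * (x - q) - f q) / (x - q) - c) with 0 by (field; lra).
  rewrite Rabs_R0; lra.
Qed.

Lemma real_ind (a b : R) (Q : R -> Prop) : a <= b -> Q a ->
  (forall t, a <= t < b -> (forall s, a <= s <= t -> Q s) -> exists d, d > 0 /\ forall s, t < s < t + d -> Q s) ->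
  (forall t, a < t <= b -> (forall s, a <= s < t -> Q s) -> Q t) -> Q b.
Proof.
  intros Hab Qa Hstep Hlim.
  set (E := fun t => a <= t <= b /\ forall s, a <= s <= t -> Q s).
  assert (HE1 : bound E) by (exists b; intros x [Hx _]; lra).
  assert (HE2 : exists x, E x) by (exists a; split; [lra| intros s Hs; replace s with a by lra; auto]).
  destruct (completeness E HE1 HE2) as [c [Hub Hlub]].
  assert (Hac : a <= c) by (apply Hub; destruct HE2; unfold E; split; [lra|intros s Hs; replace s with a by lra; auto]).
  assert (Hcb : c <= b) by (apply Hlub; intros x [Hx _]; lra).
  assert (Hbelow : forall s, a <= s < c -> Q s).
  { intros s Hs. destruct (classic (exists t, E t /\ s < t)) as [[t [[Ht1 Ht2] Hst]]|Hn].
    - apply Ht2; lra.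
    - assert (c <= s); [|lra]. apply Hlub. intros x Hx. destruct (Rle_lt_dec x s); auto.
      exfalso; apply Hn; eauto. }
  assert (Qc : Q c).
  { destruct (Rle_lt_or_eq_dec _ _ Hac) as [Hlt|Heq]; [apply Hlim; auto; lra| subst; auto]. }
  assert (Hall : forall s, a <= s <= c -> Q s).
  { intros s Hs. destruct (Rle_lt_or_eq_dec _ _ (proj2 Hs)); [apply Hbelow; lra| subst; auto]. }
  destruct (Rle_lt_or_eq_dec _ _ Hcb) as [Hlt|Heq]; [|subst; auto].
  exfalso. destruct (Hstep c ltac:(lra) Hall) as [d [Hd Hs]].
  set (c' := Rmin (c + d/2) b).
  assert (c' <= c).
  { apply Hub. unfold c'. pose proof (Rmin_l (c+d/2) b); pose proof (Rmin_r (c+d/2) b).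
    split. split; try lra. apply Rmin_glb; lra.
    intros s Hs'. destruct (Rle_lt_dec s c). apply Hall; lra. apply Hs; lra. }
  unfold c' in H. assert (c < Rmin (c + d/2) b) by (apply Rmin_glb_lt; lra). lra.
Qed.


Lemma kd_abs j r x : Rabs (kd j r * x) <= Rabs x.
Proof. unfold kd; destruct (Nat.eq_dec j r); rewrite ?Rmult_1_l, ?Rmult_0_l, ?Rabs_R0; try lra.
  apply Rabs_pos. Qed.

Section Gen.
Variables (n : nat) (I : R -> Prop) (P : nat -> R -> R).
Hypothesis HI : is_interval I.
Hypothesis Hn1 : (1 <= n)%nat.
Hypothesis Hc1 : cond1 n I P.
Hypothesis HL : forall q, I q -> (exists x, I x /\ x < q) -> exists r, (1 <= r <= n)%nat /\ LeftInd I P q r.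
Hypothesis HR : forall q, I q -> (exists x, I x /\ q < x) -> exists r, (1 <= r <= n)%nat /\ RightInd I P q r.
Hypothesis HC : forall q r s, I q -> LeftInd I P q r -> RightInd I P q s -> (r < s)%nat ->
  forall j, (r <= j <= s)%nat -> P j q = P r q.

Lemma LeftNb q : I q -> exists d r, d > 0 /\ (1 <= r <= n)%nat /\ forall x, q - d < x <= q -> (exists y, I y /\ y < q) ->
  I x /\ forall j, P j x = P j q + kd j r * (x - q).
Proof.
  intros Hq. destruct (classic (exists y, I y /\ y < q)) as [He|Hn].
  - destruct (HL q Hq He) as [r [Hr [d [Hd H]]]]. exists d, r. split; [auto|split; [auto|]]. intros x Hx _. apply H; auto.
  - exists 1, 1%nat. split; [lra|split; [lia|]]. intros; contradiction.
Qed.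

Lemma RightNb q : I q -> exists d r, d > 0 /\ (1 <= r <= n)%nat /\ forall x, q <= x < q + d -> (exists y, I y /\ q < y) ->
  I x /\ forall j, P j x = P j q + kd j r * (x - q).
Proof.
  intros Hq. destruct (classic (exists y, I y /\ q < y)) as [He|Hn].
  - destruct (HR q Hq He) as [r [Hr [d [Hd H]]]]. exists d, r. split; [auto|split; [auto|]]. intros x Hx _. apply H; auto.
  - exists 1, 1%nat. split; [lra|split; [lia|]]. intros; contradiction.
Qed.

Lemma LeftInd_uniq q r r' : LeftInd I P q r -> LeftInd I P q r' -> r = r'.
Proof.
  intros [d [Hd H]] [d' [Hd' H']]. set (x := q - Rmin d d' / 2).
  assert (0 < Rmin d d') by (apply Rmin_glb_lt; lra).
  pose proof (Rmin_l d d'); pose proof (Rmin_r d d').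
  destruct (H x ltac:(unfold x; split; lra)) as [_ E1].
  destruct (H' x ltac:(unfold x; split; lra)) as [_ E2].
  specialize (E1 r); specialize (E2 r). rewrite kd_eq in E1.
  apply kd_one. apply (Rmult_eq_reg_r (x - q)); [|unfold x; lra]. lra.
Qed.

Lemma RightInd_uniq q r r' : RightInd I P q r -> RightInd I P q r' -> r = r'.
Proof.
  intros [d [Hd H]] [d' [Hd' H']]. set (x := q + Rmin d d' / 2).
  assert (0 < Rmin d d') by (apply Rmin_glb_lt; lra).
  pose proof (Rmin_l d d'); pose proof (Rmin_r d d').
  destruct (H x ltac:(unfold x; split; lra)) as [_ E1].
  destruct (H' x ltac:(unfold x; split; lra)) as [_ E2].
  specialize (E1 r); specialize (E2 r). rewrite kd_eq in E1.
  apply kd_one. apply (Rmult_eq_reg_r (x - q)); [|unfold x; lra]. lra.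
Qed.

Lemma interior_sides q : interior_pt I q -> (exists x, I x /\ x < q) /\ (exists x, I x /\ q < x).
Proof.
  intros [d [Hd H]]. split; [exists (q - d/2) | exists (q + d/2)]; split; try lra; apply H;
  [replace (q - d/2 - q) with (-(d/2)) by ring; rewrite Rabs_Ropp|replace (q + d/2 - q) with (d/2) by ring];
  rewrite Rabs_right; lra.
Qed.

Lemma idx_at x : interior_pt I x -> diff_at n P x -> I x ->
  exists r, (1 <= r <= n)%nat /\ LeftInd I P x r /\ RightInd I P x r.
Proof.
  intros Hint Hd Hx. destruct (interior_sides x Hint) as [Hl Hr].
  destruct (HL x Hx Hl) as [rL [HrL HLi]]. destruct (HR x Hx Hr) as [rR [HrR HRi]].
  exists rL. split; auto. split; auto.
  replace rL with rR; auto.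
  destruct (Hd rL HrL) as [l Hl'].
  destruct HLi as [d1 [Hd1 H1]]. destruct HRi as [d2 [Hd2 H2]].
  assert (l = kd rL rL) by (apply (deriv_left_affine (P rL) x l _ d1); auto; intros; apply H1; auto).
  assert (l = kd rL rR) by (apply (deriv_right_affine (P rL) x l _ d2); auto; intros; apply H2; auto).
  rewrite kd_eq in *. symmetry; apply kd_one; lra.
Qed.

Lemma n_system_of_LTA : n_system n I P.
Proof.
  split; [split; [|split] | split; [auto|split]].
  -
    intros j q Hj Hq eps Heps.
    destruct (LeftNb q Hq) as [dL [rL [HdL [_ HLn]]]]. destruct (RightNb q Hq) as [dR [rR [HdR [_ HRn]]]].
    exists (Rmin dL (Rmin dR eps)).
    assert (0 < Rmin dR eps) by (apply Rmin_glb_lt; lra).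
    assert (0 < Rmin dL (Rmin dR eps)) by (apply Rmin_glb_lt; lra).
    pose proof (Rmin_l dL (Rmin dR eps)); pose proof (Rmin_r dL (Rmin dR eps)).
    pose proof (Rmin_l dR eps); pose proof (Rmin_r dR eps).
    split; auto. intros x Hx Hxq. apply Rabs_def2 in Hxq.
    destruct (Rtotal_order x q) as [Hlt|[Heq|Hgt]].
    + destruct (HLn x ltac:(lra) ltac:(exists x; auto)) as [_ E]. rewrite E.
      replace (P j q + kd j rL * (x - q) - P j q) with (kd j rL * (x - q)) by ring.
      eapply Rle_lt_trans; [apply kd_abs|]. rewrite Rabs_left by lra. lra.
    + subst. replace (P j q - P j q) with 0 by ring. rewrite Rabs_R0; lra.
    + destruct (HRn x ltac:(lra) ltac:(exists x; auto)) as [_ E]. rewrite E.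
      replace (P j q + kd j rR * (x - q) - P j q) with (kd j rR * (x - q)) by ring.
      eapply Rle_lt_trans; [apply kd_abs|]. rewrite Rabs_right by lra. lra.
  -
    intros q Hq.
    destruct (LeftNb q Hq) as [dL [rL [HdL [_ HLn]]]]. destruct (RightNb q Hq) as [dR [rR [HdR [_ HRn]]]].
    exists (Rmin dL dR). assert (0 < Rmin dL dR) by (apply Rmin_glb_lt; lra).
    pose proof (Rmin_l dL dR); pose proof (Rmin_r dL dR).
    split; auto. exists (q :: nil). intros x Hx [_ HD] Hxq. left.
    apply Rabs_def2 in Hxq.
    destruct (Rtotal_order x q) as [Hlt|[Heq|Hgt]]; auto; exfalso.
    + assert (Hw : exists y, I y /\ y < q) by (exists x; auto).
      destruct HD as [HD|HD]; apply HD.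
      * exists (Rmin (x - (q - dL)) (q - x)). split. apply Rmin_glb_lt; lra.
        intros y Hy. apply Rabs_def2 in Hy. pose proof (Rmin_l (x - (q - dL)) (q - x)); pose proof (Rmin_r (x - (q - dL)) (q - x)).
        apply (HLn y ltac:(lra) Hw).
      * intros j Hj. exists (kd j rL). apply (deriv_affine_loc _ _ _ (Rmin (x - (q - dL)) (q - x))).
        apply Rmin_glb_lt; lra.
        intros y Hy. apply Rabs_def2 in Hy. pose proof (Rmin_l (x - (q - dL)) (q - x)); pose proof (Rmin_r (x - (q - dL)) (q - x)).
        destruct (HLn y ltac:(lra) Hw) as [_ E1]. destruct (HLn x ltac:(lra) Hw) as [_ E2].
        rewrite E1, E2. ring.
    + assert (Hw : exists y, I y /\ q < y) by (exists x; auto).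
      destruct HD as [HD|HD]; apply HD.
      * exists (Rmin (q + dR - x) (x - q)). split. apply Rmin_glb_lt; lra.
        intros y Hy. apply Rabs_def2 in Hy. pose proof (Rmin_l (q + dR - x) (x - q)); pose proof (Rmin_r (q + dR - x) (x - q)).
        apply (HRn y ltac:(lra) Hw).
      * intros j Hj. exists (kd j rR). apply (deriv_affine_loc _ _ _ (Rmin (q + dR - x) (x - q))).
        apply Rmin_glb_lt; lra.
        intros y Hy. apply Rabs_def2 in Hy. pose proof (Rmin_l (q + dR - x) (x - q)); pose proof (Rmin_r (q + dR - x) (x - q)).
        destruct (HRn y ltac:(lra) Hw) as [_ E1]. destruct (HRn x ltac:(lra) Hw) as [_ E2].
        rewrite E1, E2. ring.
  -
    intros q Hq HnD.
    assert (Hint : interior_pt I q) by (apply NNPP; intro; apply HnD; split; auto).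
    destruct (interior_sides q Hint) as [Wl Wr].
    destruct (LeftNb q Hq) as [dL [rL [HdL [_ HLn]]]]. destruct (RightNb q Hq) as [dR [rR [HdR [_ HRn]]]].
    exists (Rmin dL dR). assert (0 < Rmin dL dR) by (apply Rmin_glb_lt; lra).
    pose proof (Rmin_l dL dR); pose proof (Rmin_r dL dR).
    split; auto. intros q' Hq' HnD' Hqq j l l' Hj Hl Hl'. apply Rabs_def2 in Hqq.
    destruct (Rtotal_order q' q) as [Hlt|[Heq|Hgt]].
    + assert (l = kd j rL).
      { apply (deriv_left_affine (P j) q l _ dL); auto. intros; apply HLn; auto. }
      assert (l' = kd j rL).
      { apply (deriv_left_affine (P j) q' l' _ (q' - (q - dL))); auto; try lra. intros y Hy.
        destruct (HLn y ltac:(lra) Wl) as [_ E1]. destruct (HLn q' ltac:(lra) Wl) as [_ E2].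
        rewrite E1, E2. ring. }
      lra.
    + subst. eapply uniqueness_limite; eauto.
    + assert (l = kd j rR).
      { apply (deriv_right_affine (P j) q l _ dR); auto. intros; apply HRn; auto. }
      assert (l' = kd j rR).
      { apply (deriv_right_affine (P j) q' l' _ (q + dR - q')); auto; try lra. intros y Hy.
        destruct (HRn y ltac:(lra) Wr) as [_ E1]. destruct (HRn q' ltac:(lra) Wr) as [_ E2].
        rewrite E1, E2. ring. }
      lra.
  -
    intros H [HHi [[x0 Hx0] [HHo HHI]]] Hdiff.
    assert (Hint : forall x, H x -> interior_pt I x).
    { intros x Hx. destruct (HHo x Hx) as [d [Hd Hd']]. exists d; split; auto. }
    assert (Hidx : forall x, H x -> exists r, (1 <= r <= n)%nat /\ LeftInd I P x r /\ RightInd I P x r).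
    { intros x Hx. apply idx_at; auto. }
    assert (Hlin : forall x y, H x -> H y -> x <= y -> forall rx, RightInd I P x rx ->
       forall j, P j y = P j x + kd j rx * (y - x)).
    { intros x y Hx Hy Hxy rx Hrx.
      set (Q := fun t => forall j, P j t = P j x + kd j rx * (t - x)).
      apply (real_ind x y Q Hxy).
        - intro j; ring.
        - intros t Ht Hall. assert (Htx : H t) by (apply (HHi x t y); auto; lra).
          destruct (Hidx t Htx) as [r [Hr [HLt HRt]]].
          assert (r = rx).
          { destruct (Rle_lt_or_eq_dec _ _ (proj1 Ht)) as [Hlt|Heq].
            - destruct HLt as [d1 [Hd1 H1]]. set (m := Rmin d1 (t - x)).
              assert (0 < m) by (apply Rmin_glb_lt; lra).
              pose proof (Rmin_l d1 (t - x)); pose proof (Rmin_r d1 (t - x)).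
              set (s := t - m / 2).
              destruct (H1 s ltac:(unfold s, m in *; split; lra)) as [_ E1].
              pose proof (Hall s ltac:(unfold s, m in *; split; lra) r) as E2.
              pose proof (Hall t ltac:(lra) r) as E3. specialize (E1 r). rewrite kd_eq in E1.
              apply kd_one. apply (Rmult_eq_reg_r (s - t)); [|unfold s; lra]. unfold Q in *. lra.
            - subst. eapply RightInd_uniq; eauto. }
          subst r. destruct HRt as [d2 [Hd2 H2]]. exists d2. split; auto.
          intros s Hs j. destruct (H2 s ltac:(lra)) as [_ E]. rewrite E.
          rewrite (Hall t ltac:(lra) j). ring.
        - intros t Ht Hall. assert (Htx : H t) by (apply (HHi x t y); auto; lra).
          destruct (Hidx t Htx) as [r [Hr [HLt HRt]]].
          destruct HLt as [d1 [Hd1 H1]]. set (m := Rmin d1 (t - x)).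
          assert (0 < m) by (apply Rmin_glb_lt; lra).
          pose proof (Rmin_l d1 (t - x)); pose proof (Rmin_r d1 (t - x)).
          set (s1 := t - m / 2). set (s2 := t - m / 4).
          assert (r = rx).
          { destruct (H1 s1 ltac:(unfold s1, m in *; split; lra)) as [_ E1].
            destruct (H1 s2 ltac:(unfold s2, m in *; split; lra)) as [_ E2].
            pose proof (Hall s1 ltac:(unfold s1, m in *; split; lra) r) as E3.
            pose proof (Hall s2 ltac:(unfold s2, m in *; split; lra) r) as E4.
            specialize (E1 r); specialize (E2 r). rewrite kd_eq in E1, E2.
            apply kd_one. apply (Rmult_eq_reg_r (s1 - s2)); [|unfold s1, s2; lra]. lra. }
          subst r. intro j.
          destruct (H1 s1 ltac:(unfold s1, m in *; split; lra)) as [_ E1].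
          pose proof (Hall s1 ltac:(unfold s1, m in *; split; lra) j) as E3.
          specialize (E1 j). lra. }
    assert (Hmain : forall x y, H x -> H y -> x <= y -> forall rx, RightInd I P x rx -> RightInd I P y rx).
    { intros x y Hx Hy Hxy rx Hrx.
      destruct (Hidx y Hy) as [r [Hr [HLy HRy]]].
      destruct (Rle_lt_or_eq_dec _ _ Hxy) as [Hlt|Heq]; [|subst; auto].
      replace rx with r; auto.
      destruct HLy as [d1 [Hd1 H1]]. set (m := Rmin d1 (y - x)).
      assert (0 < m) by (apply Rmin_glb_lt; lra).
      pose proof (Rmin_l d1 (y - x)); pose proof (Rmin_r d1 (y - x)).
      set (s := y - m / 2).
      assert (Hs : H s) by (apply (HHi x s y); auto; unfold s, m in *; lra).
      destruct (H1 s ltac:(unfold s, m in *; split; lra)) as [_ E1].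
      pose proof (Hlin x s Hx Hs ltac:(unfold s, m in *; lra) rx Hrx r) as E2.
      pose proof (Hlin x y Hx Hy Hxy rx Hrx r) as E3.
      specialize (E1 r). rewrite kd_eq in E1.
      apply kd_one. apply (Rmult_eq_reg_r (s - y)); [|unfold s; lra]. lra. }
    destruct (Hidx x0 Hx0) as [r0 [Hr0 [_ HR0]]].
    assert (Hall : forall x, H x -> RightInd I P x r0).
    { intros x Hx. destruct (Rle_lt_dec x0 x).
      - apply (Hmain x0 x); auto.
      - destruct (Hidx x Hx) as [rx [_ [_ HRx]]].
        pose proof (Hmain x x0 Hx Hx0 ltac:(lra) rx HRx).
        replace r0 with rx; auto. eapply RightInd_uniq; eauto. }
    assert (Hl2 : forall x y j, H x -> H y -> P j y - P j x = kd j r0 * (y - x)).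
    { intros x y j Hx Hy. destruct (Rle_lt_dec x y).
      - rewrite (Hlin x y Hx Hy r r0 (Hall x Hx) j). ring.
      - rewrite (Hlin y x Hy Hx ltac:(lra) r0 (Hall y Hy) j). ring. }
    exists r0. split; auto. split.
    + intros x y Hx Hy. rewrite Hl2 by auto. rewrite kd_eq; ring.
    + intros j Hj Hne x y Hx Hy. pose proof (Hl2 x y j Hx Hy). rewrite kd_neq in H0 by auto. lra.
  -
    intros q Hint Hnd r s Hr Hs Hld Hrd Hrs j Hj.
    destruct (interior_sides q Hint) as [Wl Wr].
    assert (Hq : I q) by (destruct Hint as [d [Hd Hd']]; apply Hd'; rewrite Rminus_diag, Rabs_R0; lra).
    destruct (HL q Hq Wl) as [rL [_ HLi]]. destruct (HR q Hq Wr) as [rR [_ HRi]].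
    assert (r = rL).
    { destruct HLi as [d1 [Hd1 H1]].
      assert (1 = kd r rL) by (apply (left_deriv_affine (P r) q 1 _ d1); auto; intros; apply H1; auto).
      apply kd_one; auto. }
    assert (s = rR).
    { destruct HRi as [d1 [Hd1 H1]].
      assert (1 = kd s rR) by (apply (right_deriv_affine (P s) q 1 _ d1); auto; intros; apply H1; auto).
      apply kd_one; auto. }
    subst. apply (HC q rL rR); auto.
Qed.
End Gen.


Definition sm (k : nat) (t : Z) : nat := Z.to_nat (t mod Z.of_nat k).
Definition Gt (k p : nat) (t : Z) (w : R) : R :=
  IZR (t / Z.of_nat k) + (if (k - sm k t <=? p)%nat then 1 else 0)
  + (if Nat.eq_dec p (k - 1 - sm k t) then w - IZR t else 0).
Definition G (k p : nat) (w : R) : R := Gt k p (Int_part w) w.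

Lemma Int_part_eq t w : IZR t <= w < IZR t + 1 -> Int_part w = t.
Proof.
  intros [H1 H2]. unfold Int_part. assert (up w = (t + 1)%Z).
  { symmetry. apply tech_up; rewrite plus_IZR; simpl; lra. }
  rewrite H; ring.
Qed.

Lemma Int_part_bounds w : IZR (Int_part w) <= w < IZR (Int_part w) + 1.
Proof. destruct (base_Int_part w). lra. Qed.

Lemma sm_lt k t : (1 <= k)%nat -> (sm k t < k)%nat.
Proof.
  intros Hk. unfold sm. pose proof (Z.mod_pos_bound t (Z.of_nat k) ltac:(lia)). lia.
Qed.

Lemma divmod_Z k t : (1 <= k)%nat -> t = (Z.of_nat k * (t / Z.of_nat k) + Z.of_nat (sm k t))%Z.
Proof.
  intros Hk. unfold sm. pose proof (Z.mod_pos_bound t (Z.of_nat k) ltac:(lia)).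
  rewrite Z2Nat.id by lia. apply Z_div_mod_eq_full.
Qed.

Lemma divmod_R k t : (1 <= k)%nat -> IZR t = INR k * IZR (t / Z.of_nat k) + INR (sm k t).
Proof.
  intros Hk. rewrite (divmod_Z k t Hk) at 1. rewrite plus_IZR, mult_IZR, <- !INR_IZR_INZ. ring.
Qed.

Lemma sm_succ1 k t : (1 <= k)%nat -> (sm k t + 1 < k)%nat ->
  sm k (t + 1) = (sm k t + 1)%nat /\ ((t + 1) / Z.of_nat k = t / Z.of_nat k)%Z.
Proof.
  intros Hk H. pose proof (divmod_Z k t Hk) as E.
  assert (E2 : (t + 1 = Z.of_nat k * (t / Z.of_nat k) + Z.of_nat (sm k t + 1))%Z) by lia.
  assert (Hq : (t / Z.of_nat k)%Z = ((t+1) / Z.of_nat k)%Z).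
  { apply (Z.div_unique (t+1) (Z.of_nat k) _ (Z.of_nat (sm k t + 1))); lia. }
  split; [|lia]. unfold sm at 1.
  assert (((t + 1) mod Z.of_nat k)%Z = Z.of_nat (sm k t + 1)).
  { symmetry. apply (Z.mod_unique (t+1) (Z.of_nat k) (t / Z.of_nat k)); lia. }
  rewrite H0. lia.
Qed.

Lemma sm_succ2 k t : (1 <= k)%nat -> (sm k t + 1 = k)%nat ->
  sm k (t + 1) = 0%nat /\ ((t + 1) / Z.of_nat k = t / Z.of_nat k + 1)%Z.
Proof.
  intros Hk H. pose proof (divmod_Z k t Hk) as E.
  assert (E2 : (t + 1 = Z.of_nat k * (t / Z.of_nat k + 1) + 0)%Z) by lia.
  split.
  - unfold sm. assert (((t + 1) mod Z.of_nat k)%Z = 0%Z).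
    { symmetry. apply (Z.mod_unique (t+1) (Z.of_nat k) (t / Z.of_nat k + 1)); lia. }
    rewrite H0; reflexivity.
  - symmetry. apply (Z.div_unique (t+1) (Z.of_nat k) _ 0); lia.
Qed.

Lemma Gt_succ k p t : (1 <= k)%nat -> (p < k)%nat -> Gt k p (t + 1) (IZR t + 1) = Gt k p t (IZR t + 1).
Proof.
  intros Hk Hp. pose proof (sm_lt k t Hk).
  unfold Gt. rewrite plus_IZR. simpl (IZR 1).
  destruct (Nat.eq_dec (sm k t + 1) k) as [E|E].
  - destruct (sm_succ2 k t Hk E) as [E1 E2]. rewrite E1, E2, plus_IZR. simpl (IZR 1).
    destruct (Nat.leb_spec (k - 0) p); [lia|].
    destruct (Nat.leb_spec (k - sm k t) p); destruct (Nat.eq_dec p (k - 1 - 0));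
    destruct (Nat.eq_dec p (k - 1 - sm k t)); try lia; lra.
  - destruct (sm_succ1 k t Hk ltac:(lia)) as [E1 E2]. rewrite E1, E2.
    destruct (Nat.leb_spec (k - (sm k t + 1)) p); destruct (Nat.leb_spec (k - sm k t) p);
    destruct (Nat.eq_dec p (k - 1 - (sm k t + 1))); destruct (Nat.eq_dec p (k - 1 - sm k t)); try lia; lra.
Qed.

Lemma G_seg k p t w : (1 <= k)%nat -> (p < k)%nat -> IZR t <= w <= IZR t + 1 -> G k p w = Gt k p t w.
Proof.
  intros Hk Hp [H1 H2]. unfold G. destruct (Rle_lt_or_eq_dec _ _ H2) as [Hlt|Heq].
  - rewrite (Int_part_eq t w); auto.
  - subst w. rewrite (Int_part_eq (t+1)); [|rewrite plus_IZR; simpl; lra].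
    apply Gt_succ; auto.
Qed.

Lemma Gt_diff k p t w w' : Gt k p t w - Gt k p t w' = kd p (k - 1 - sm k t) * (w - w').
Proof.
  unfold Gt, kd. destruct (Nat.eq_dec p (k - 1 - sm k t)); ring.
Qed.

Lemma Gt_bounds k p t w : (1 <= k)%nat -> IZR t <= w <= IZR t + 1 ->
  IZR (t / Z.of_nat k) <= Gt k p t w <= IZR (t / Z.of_nat k) + 1.
Proof.
  intros Hk Hw. unfold Gt. pose proof (sm_lt k t Hk).
  destruct (Nat.leb_spec (k - sm k t) p); destruct (Nat.eq_dec p (k - 1 - sm k t)); try lia; lra.
Qed.

Lemma G_mono k p w : (1 <= k)%nat -> (p + 1 < k)%nat -> G k p w <= G k (p + 1) w.
Proof.
  intros Hk Hp. unfold G, Gt. pose proof (Int_part_bounds w). pose proof (sm_lt k (Int_part w) Hk).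
  set (s := sm k (Int_part w)) in *.
  destruct (Nat.leb_spec (k - s) p); destruct (Nat.eq_dec p (k - 1 - s));
  destruct (Nat.leb_spec (k - s) (p+1)); destruct (Nat.eq_dec (p+1) (k - 1 - s)); try lia; lra.
Qed.

Lemma sum_ind_ge c K : sum_f_R0 (fun p => if (c <=? p)%nat then 1 else 0) K = INR (K + 1 - c).
Proof.
  induction K.
  - simpl sum_f_R0. destruct c; simpl; lra.
  - rewrite tech5, IHK; cbv beta. destruct (Nat.leb_spec c (S K)).
    + replace (S K + 1 - c)%nat with (S (K + 1 - c)) by lia. rewrite S_INR; lra.
    + replace (S K + 1 - c)%nat with (K + 1 - c)%nat by lia. lra.
Qed.

Lemma sum_ind_eq c K : sum_f_R0 (fun p => if Nat.eq_dec p c then 1 else 0) K = if (c <=? K)%nat then 1 else 0.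
Proof.
  induction K.
  - destruct c; simpl; lra.
  - rewrite tech5, IHK; cbv beta. destruct (Nat.eq_dec (S K) c); destruct (Nat.leb_spec c K);
    destruct (Nat.leb_spec c (S K)); try lia; lra.
Qed.

Lemma G_sum k w : (1 <= k)%nat -> sum_f_R0 (fun p => G k p w) (k - 1) = w.
Proof.
  intros Hk. unfold G, Gt. set (t := Int_part w). pose proof (sm_lt k t Hk).
  set (s := sm k t) in *.
  assert (E : forall p, IZR (t / Z.of_nat k) + (if (k - s <=? p)%nat then 1 else 0) +
     (if Nat.eq_dec p (k - 1 - s) then w - IZR t else 0) =
     IZR (t / Z.of_nat k) + (if (k - s <=? p)%nat then 1 else 0) +
     (if Nat.eq_dec p (k - 1 - s) then 1 else 0) * (w - IZR t)).
  { intro p. destruct (Nat.eq_dec p (k - 1 - s)); ring. }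
  rewrite (sum_eq _ _ _ (fun p _ => E p)).
  rewrite sum_plus, sum_plus, sum_cte, <- scal_sum, sum_ind_ge, sum_ind_eq.
  destruct (Nat.leb_spec (k - 1 - s) (k - 1)); [|lia].
  replace (S (k - 1)) with k by lia. replace (k - 1 + 1 - (k - s))%nat with s by lia.
  pose proof (divmod_R k t Hk). fold s in H1. lra.
Qed.

Lemma G_approx k p w : (1 <= k)%nat -> Rabs (G k p w - w / INR k) <= 1.
Proof.
  intros Hk. pose proof (Int_part_bounds w) as Hb. set (t := Int_part w) in *.
  pose proof (Gt_bounds k p t w Hk ltac:(lra)) as Hg.
  assert (HG : G k p w = Gt k p t w) by reflexivity. rewrite HG.
  pose proof (divmod_R k t Hk). pose proof (sm_lt k t Hk).
  assert (Hk0 : INR k > 0) by (apply lt_0_INR; lia).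
  assert (Hs : INR (sm k t) <= INR k - 1).
  { assert (INR (sm k t + 1) <= INR k) by (apply le_INR; lia). rewrite plus_INR in H1. simpl in H1. lra. }
  pose proof (pos_INR (sm k t)).
  assert (IZR (t / Z.of_nat k) <= w / INR k < IZR (t / Z.of_nat k) + 1).
  { split; apply (Rmult_le_reg_r (INR k)) || apply (Rmult_lt_reg_r (INR k)); auto;
    unfold Rdiv; rewrite Rmult_assoc, Rinv_l, Rmult_1_r by lra; nra. }
  apply Rabs_le. lra.
Qed.

Lemma sm_pred k t : (1 <= k)%nat ->
  (sm k t = 0%nat -> sm k (t - 1) = (k - 1)%nat) /\ ((1 <= sm k t)%nat -> sm k (t - 1) = (sm k t - 1)%nat).
Proof.
  intros Hk. pose proof (sm_lt k (t - 1) Hk).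
  assert (Et : sm k t = sm k (t - 1 + 1)) by (f_equal; ring). rewrite Et.
  destruct (Nat.eq_dec (sm k (t - 1) + 1) k) as [E|E].
  - destruct (sm_succ2 k (t - 1) Hk E) as [E1 _]. rewrite E1. split; intros; lia.
  - destruct (sm_succ1 k (t - 1) Hk ltac:(lia)) as [E1 _]. rewrite E1. split; intros; lia.
Qed.

Lemma Gt_at_zero k p t : (1 <= k)%nat -> (p < k)%nat -> sm k t = 0%nat -> Gt k p t (IZR t) = IZR (t / Z.of_nat k).
Proof.
  intros Hk Hp Hs. unfold Gt. rewrite Hs. destruct (Nat.leb_spec (k - 0) p); [lia|].
  destruct (Nat.eq_dec p (k - 1 - 0)); ring.
Qed.

Lemma Gt_00 k p : (1 <= k)%nat -> (p < k)%nat -> Gt k p 0 0 = 0.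
Proof.
  intros Hk Hp. replace 0 with (IZR 0) at 2 by reflexivity. rewrite Gt_at_zero; auto.
Qed.

Lemma Gt_top k p N : (1 <= k)%nat -> (p < k)%nat -> (1 <= N)%nat ->
  sm k (Z.of_nat k * Z.of_nat N - 1) = (k - 1)%nat /\
  Gt k p (Z.of_nat k * Z.of_nat N - 1) (INR k * INR N) = INR N.
Proof.
  intros Hk Hp HN. set (t := (Z.of_nat k * Z.of_nat N - 1)%Z).
  assert (Hd : (t / Z.of_nat k = Z.of_nat N - 1)%Z).
  { symmetry. apply (Z.div_unique t (Z.of_nat k) _ (Z.of_nat k - 1)); unfold t; lia. }
  assert (Hm : sm k t = (k - 1)%nat).
  { unfold sm. assert ((t mod Z.of_nat k)%Z = (Z.of_nat k - 1)%Z).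
    { symmetry. apply (Z.mod_unique t (Z.of_nat k) (Z.of_nat N - 1)); unfold t; lia. }
    rewrite H. lia. }
  split; auto. unfold Gt. rewrite Hm, Hd.
  assert (IZR t = INR k * INR N - 1).
  { unfold t. rewrite minus_IZR, mult_IZR, <- !INR_IZR_INZ. reflexivity. }
  rewrite H, minus_IZR, <- INR_IZR_INZ. simpl (IZR 1).
  destruct (Nat.leb_spec (k - (k - 1)) p); destruct (Nat.eq_dec p (k - 1 - (k - 1))); try lia; lra.
Qed.

Lemma G_nonneg k p w : (1 <= k)%nat -> (p < k)%nat -> 0 <= w -> 0 <= G k p w.
Proof.
  intros Hk Hp Hw. pose proof (Int_part_bounds w) as Hb. set (t := Int_part w) in *.
  assert (Ht : (0 <= t)%Z) by (assert (-1 < t)%Z by (apply lt_IZR; simpl; lra); lia).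
  assert (Hd : (0 <= t / Z.of_nat k)%Z) by (apply Z.div_pos; lia).
  pose proof (Gt_bounds k p t w Hk ltac:(lra)). unfold G. fold t.
  apply IZR_le in Hd. simpl in Hd. lra.
Qed.

Lemma G_le_N k p w N : (1 <= k)%nat -> (p < k)%nat -> w < INR k * INR N -> G k p w <= INR N.
Proof.
  intros Hk Hp Hw. pose proof (Int_part_bounds w) as Hb. set (t := Int_part w) in *.
  assert (Ht : (t < Z.of_nat k * Z.of_nat N)%Z).
  { apply lt_IZR. rewrite mult_IZR, <- !INR_IZR_INZ. lra. }
  assert (Hd : (t / Z.of_nat k <= Z.of_nat N - 1)%Z).
  { assert (t / Z.of_nat k < Z.of_nat N)%Z by (apply Z.div_lt_upper_bound; lia). lia. }
  pose proof (Gt_bounds k p t w Hk ltac:(lra)). unfold G. fold t.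
  apply IZR_le in Hd. rewrite minus_IZR, <- INR_IZR_INZ in Hd. simpl in Hd. lra.
Qed.

Lemma sum_block n rl rh (h : nat -> R) : (1 <= rl)%nat -> (rl <= rh)%nat -> (rh <= n)%nat ->
  sum_f 1 n (fun j => if ((rl <=? j)%nat && (j <=? rh)%nat)%bool then h (j - rl)%nat else 0) =
  sum_f_R0 h (rh - rl).
Proof.
  intros H1 H2 H3. unfold sum_f.
  set (F := fun x => (fun j => if ((rl <=? j)%nat && (j <=? rh)%nat)%bool then h (j - rl)%nat else 0) (x + 1)%nat).
  assert (Hc : forall N, sum_f_R0 F N = if (N + 1 <? rl)%nat then 0 else sum_f_R0 h (Nat.min (N + 1) rh - rl)).
  { induction N.
    - change (sum_f_R0 F 0) with (F 0%nat). unfold F. cbv beta.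
      destruct (Nat.ltb_spec (0 + 1) rl); destruct (Nat.leb_spec rl (0 + 1)); destruct (Nat.leb_spec (0 + 1) rh);
      simpl andb; try lia; try reflexivity.
      replace (0 + 1 - rl)%nat with 0%nat by lia. replace (Nat.min (0 + 1) rh - rl)%nat with 0%nat by lia. reflexivity.
    - rewrite tech5, IHN. unfold F. cbv beta.
      destruct (Nat.ltb_spec (N + 1) rl); destruct (Nat.ltb_spec (S N + 1) rl);
      destruct (Nat.leb_spec rl (S N + 1)); destruct (Nat.leb_spec (S N + 1) rh); simpl andb; try lia.
      + lra.
      + replace (Nat.min (S N + 1) rh - rl)%nat with 0%nat by lia. replace (S N + 1 - rl)%nat with 0%nat by lia.
        simpl; lra.
      + replace (Nat.min (S N + 1) rh - rl)%nat with (S (Nat.min (N + 1) rh - rl)) by lia. rewrite tech5.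
        replace (S N + 1 - rl)%nat with (S (Nat.min (N + 1) rh - rl)) by lia. reflexivity.
      + replace (Nat.min (S N + 1) rh) with (Nat.min (N + 1) rh) by lia. lra. }
  rewrite Hc. destruct (Nat.ltb_spec (n - 1 + 1) rl); [lia|]. f_equal. lia.
Qed.

Lemma sum_scal_minus (g : nat -> R) c u K :
  sum_f_R0 (fun p => c * (g p - u)) K = c * sum_f_R0 g K - c * u * INR (S K).
Proof.
  induction K.
  - simpl. ring.
  - rewrite !tech5, IHK. rewrite (S_INR (S K)). ring.
Qed.


Definition isglb (E : R -> Prop) m := (forall x, E x -> m <= x) /\ (forall m', (forall x, E x -> m' <= x) -> m' <= m).

Lemma glb_exists E : (exists x, E x) -> (forall x, E x -> 0 <= x) -> exists m, isglb E m.
Proof.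
  intros [x0 Hx0] Hpos. set (E' := fun y => E (- y)).
  assert (bound E') by (exists 0; intros y Hy; specialize (Hpos _ Hy); lra).
  assert (exists y, E' y) by (exists (- x0); unfold E'; rewrite Ropp_involutive; auto).
  destruct (completeness E' H H0) as [M [HM1 HM2]].
  exists (- M). split.
  - intros x Hx. assert (E' (- x)) by (unfold E'; rewrite Ropp_involutive; auto).
    specialize (HM1 _ H1). lra.
  - intros m' Hm'. assert (M <= - m'); [|lra]. apply HM2. intros y Hy. specialize (Hm' _ Hy). lra.
Qed.

Lemma glb_uniq E m1 m2 : isglb E m1 -> isglb E m2 -> m1 = m2.
Proof. intros [A1 B1] [A2 B2]. apply Rle_antisym; auto. Qed.

Lemma lub_uniq E m1 m2 : is_lub E m1 -> is_lub E m2 -> m1 = m2.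
Proof. intros [A1 B1] [A2 B2]. apply Rle_antisym; auto. Qed.

Lemma list_sep (l : list R) q : exists e, e > 0 /\ forall y, In y l -> y <> q -> e <= Rabs (y - q).
Proof.
  induction l as [|y l IH].
  - exists 1. split; [lra|]. intros y H; destruct H.
  - destruct IH as [e [He H]]. destruct (Req_dec y q) as [Hy|Hy].
    + exists e. split; auto. intros z [Hz|Hz] Hzq; [subst; contradiction|auto].
    + exists (Rmin e (Rabs (y - q))). split. apply Rmin_glb_lt; auto. apply Rabs_pos_lt; lra.
      intros z [Hz|Hz] Hzq. subst. apply Rmin_r.
      eapply Rle_trans; [apply Rmin_l|]. auto.
Qed.

Section Constr.
Variables (n : nat) (I : R -> Prop) (Pt : nat -> R -> R) (eps : R).
Hypothesis Hn : (2 <= n)%nat.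
Hypothesis HI : admissible_interval I.
Hypothesis HG : gen_n_system n I Pt.
Hypothesis Heps : eps > 0.

Let Dp := nondiff_set n I Pt.

Lemma Iint : is_interval I.
Proof. destruct HI; auto. Qed.
Lemma Ipos x : I x -> 0 <= x.
Proof. destruct HI as [_ [H _]]; auto. Qed.

Lemma isolate q : I q -> exists d, d > 0 /\ forall x, Rabs (x - q) < d -> x <> q -> I x -> ~ Dp x.
Proof.
  intros Hq. destruct HG as [[_ [Hdisc _]] _].
  destruct (Hdisc q Hq) as [d0 [Hd0 [l Hl]]]. destruct (list_sep l q) as [e [He Hsep]].
  exists (Rmin d0 e). split. apply Rmin_glb_lt; auto.
  intros x Hx Hxq HIx HD. pose proof (Rmin_l d0 e); pose proof (Rmin_r d0 e).
  assert (In x l) by (apply Hl; auto; lra). specialize (Hsep x H1 Hxq). lra.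
Qed.

Lemma good_nbhd q : I q -> ~ Dp q -> exists d, d > 0 /\ forall x, Rabs (x - q) < d -> I x /\ ~ Dp x.
Proof.
  intros Hq HnD.
  assert (Hint : interior_pt I q) by (apply NNPP; intro; apply HnD; split; auto).
  destruct Hint as [d1 [Hd1 H1]]. destruct (isolate q Hq) as [d2 [Hd2 H2]].
  exists (Rmin d1 d2). split. apply Rmin_glb_lt; auto.
  intros x Hx. pose proof (Rmin_l d1 d2); pose proof (Rmin_r d1 d2).
  destruct (Req_dec x q). subst; auto.
  assert (I x) by (apply H1; lra). split; auto. apply H2; auto; lra.
Qed.

Lemma Pt_diff q : I q -> ~ Dp q -> diff_at n Pt q.
Proof. intros Hq HnD. apply NNPP; intro; apply HnD; split; auto. Qed.

Definition segH (a x : R) : Prop := a < x /\ forall y, a < y <= x -> I y /\ ~ Dp y.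
Definition segStart (a : R) : Prop := ~ (I a /\ ~ Dp a).
Definition Aset q x := x <= q /\ forall y, x <= y <= q -> I y /\ ~ Dp y.
Definition aS q := epsilon (inhabits 0) (fun m => isglb (Aset q) m).

Lemma segH_I a x : segH a x -> I x /\ ~ Dp x.
Proof. intros [H1 H2]. apply H2; lra. Qed.

Lemma segH_down a x y : segH a x -> a < y <= x -> segH a y.
Proof. intros [H1 H2] Hy. split; [lra|]. intros z Hz; apply H2; lra. Qed.

Lemma aS_spec q : I q -> ~ Dp q -> isglb (Aset q) (aS q).
Proof.
  intros Hq HnD. unfold aS. apply epsilon_spec. apply glb_exists.
  - exists q. split; [lra|]. intros y Hy. replace y with q by lra. auto.
  - intros x [Hx1 Hx2]. apply Ipos. apply Hx2; lra.
Qed.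

Lemma aS_start q : I q -> ~ Dp q -> segStart (aS q) /\ segH (aS q) q.
Proof.
  intros Hq HnD. destruct (aS_spec q Hq HnD) as [Hlb Hgr].
  assert (Hlt : aS q < q).
  { destruct (good_nbhd q Hq HnD) as [d [Hd H]].
    assert (Aset q (q - d/2)).
    { split; [lra|]. intros y Hy. apply H. apply Rabs_def1; lra. }
    specialize (Hlb _ H0). lra. }
  assert (Hseg : segH (aS q) q).
  { split; auto. intros y Hy.
    destruct (classic (exists x, Aset q x /\ x < y)) as [[x [[Hx1 Hx2] Hxy]]|Hn'].
    - apply Hx2; lra.
    - assert (y <= aS q); [|lra]. apply Hgr. intros x Hx.
      destruct (Rle_lt_dec y x); auto. exfalso; apply Hn'; eauto. }
  split; auto. intros [Ha HnDa].
  destruct (good_nbhd _ Ha HnDa) as [d [Hd H]].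
  assert (Aset q (aS q - d/2)).
  { split; [lra|]. intros y Hy. destruct (Rle_lt_dec y (aS q)).
    - apply H. apply Rabs_def1; lra.
    - apply (proj2 Hseg); lra. }
  specialize (Hlb _ H0). lra.
Qed.

Lemma aS_of a x : segStart a -> segH a x -> aS x = a.
Proof.
  intros Hst Hs. destruct (segH_I a x Hs) as [Hx HnD].
  apply (glb_uniq (Aset x)); [apply aS_spec; auto|].
  split.
  - intros z [Hz1 Hz2]. destruct (Rle_lt_dec a z) as [|Hlt]; auto. exfalso. apply Hst.
    apply Hz2. destruct Hs; lra.
  - intros m' Hm'. destruct (Rle_lt_dec m' a) as [|Hlt]; auto. exfalso.
    destruct Hs as [Hax Hs].
    set (z := (a + Rmin m' x) / 2).
    assert (a < Rmin m' x) by (apply Rmin_glb_lt; lra).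
    pose proof (Rmin_l m' x); pose proof (Rmin_r m' x).
    assert (Aset x z). { split. unfold z; lra. intros y Hy. apply Hs. unfold z in Hy; lra. }
    specialize (Hm' _ H2). unfold z in Hm'. lra.
Qed.

Lemma segH_open a x : segH a x -> exists d, d > 0 /\ forall y, Rabs (y - x) < d -> segH a y.
Proof.
  intros Hs. destruct (segH_I a x Hs) as [Hx HnD]. destruct (good_nbhd x Hx HnD) as [d [Hd H]].
  destruct Hs as [Hax Hs].
  exists (Rmin d (x - a)). split. apply Rmin_glb_lt; lra.
  intros y Hy. pose proof (Rmin_l d (x - a)); pose proof (Rmin_r d (x - a)).
  apply Rabs_def2 in Hy. split; [lra|]. intros z Hz. destruct (Rle_lt_dec z x).
  - apply Hs; lra.
  - apply H. apply Rabs_def1; lra.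
Qed.

Lemma seg_open_sub a : (exists x, segH a x) -> open_subinterval I (segH a).
Proof.
  intros Hex. split; [|split; [auto|split]].
  - intros x y z Hx Hz Hy. apply (segH_down a z); auto. destruct Hx; lra.
  - intros x Hx. destruct (segH_open a x Hx) as [d [Hd H]]. exists d; auto.
  - intros x Hx. apply (segH_I a x Hx).
Qed.

Definition BlkSpec a rl rh : Prop :=
  (1 <= rl <= rh)%nat /\ (rh <= n)%nat /\
  (forall j, (rl <= j <= rh)%nat -> (forall x, segH a x -> Pt j x = Pt rl x) /\
     slope_on (segH a) (Pt j) (1 / INR (rh - rl + 1))) /\
  (forall j, (1 <= j <= n)%nat -> ~ (rl <= j <= rh)%nat -> const_on (segH a) (Pt j)).

Definition blk a : nat * nat := epsilon (inhabits (1%nat, 1%nat)) (fun p => BlkSpec a (fst p) (snd p)).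
Definition rlo a := fst (blk a).
Definition rhi a := snd (blk a).
Definition kk a := (rhi a - rlo a + 1)%nat.

Lemma blk_spec a : (exists x, segH a x) -> BlkSpec a (rlo a) (rhi a).
Proof.
  intros Hex. unfold rlo, rhi, blk.
  apply (epsilon_spec (inhabits (1%nat, 1%nat)) (fun p => BlkSpec a (fst p) (snd p))).
  destruct HG as [_ [_ [HG2 _]]].
  destruct (HG2 (segH a) (seg_open_sub a Hex)) as [rl [rh H]].
  - intros x Hx. destruct (segH_I a x Hx). apply Pt_diff; auto.
  - exists (rl, rh). exact H.
Qed.

Definition DlSpec a k d : Prop :=
  d > 0 /\ d <= eps /\ forall b, is_lub (segH a) b -> exists N : nat, (1 <= N)%nat /\ b - a = INR k * INR N * d.

Definition dl a k := epsilon (inhabits 1) (DlSpec a k).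

Lemma dl_spec a k : (1 <= k)%nat -> (exists x, segH a x) -> DlSpec a k (dl a k).
Proof.
  intros Hk [x0 Hx0]. unfold dl. apply epsilon_spec.
  assert (Hk0 : INR k > 0) by (apply lt_0_INR; lia).
  destruct (classic (exists b, is_lub (segH a) b)) as [[b Hb]|Hnb].
  - assert (Hba : b > a) by (destruct Hb as [Hb1 _]; specialize (Hb1 _ Hx0); destruct Hx0; lra).
    set (r := (b - a) / (INR k * eps)).
    assert (Hr : r > 0) by (unfold r; apply Rdiv_lt_0_compat; [lra|nra]).
    destruct (archimed r) as [Hu1 Hu2].
    assert (Hup : (1 <= up r)%Z) by (assert (0 < up r)%Z by (apply lt_IZR; simpl; lra); lia).
    set (N := Z.to_nat (up r)).
    assert (HN : INR N = IZR (up r)) by (unfold N; rewrite INR_IZR_INZ, Z2Nat.id by lia; auto).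
    assert (HN1 : (1 <= N)%nat) by (unfold N; lia).
    assert (HNp : INR N > 0) by (apply lt_0_INR; lia).
    exists ((b - a) / (INR k * INR N)). split; [|split].
    + apply Rdiv_lt_0_compat; [lra|nra].
    + apply (Rmult_le_reg_r (INR k * INR N)); [nra|].
      unfold Rdiv. rewrite Rmult_assoc, Rinv_l, Rmult_1_r by nra.
      assert (b - a = r * (INR k * eps)) by (unfold r; field; lra). nra.
    + intros b' Hb'. rewrite <- (lub_uniq _ _ _ Hb Hb'). exists N. split; auto. field. nra.
  - exists eps. split; [lra|split; [lra|]]. intros b Hb. exfalso; eauto.
Qed.


Definition corr a j x : R :=
  if ((rlo a <=? j)%nat && (j <=? rhi a)%nat)%bool
  then dl a (kk a) * (G (kk a) (j - rlo a) ((x - a) / dl a (kk a)) - (x - a) / dl a (kk a) / INR (kk a))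
  else 0.
Definition Pn0 j x : R :=
  if excluded_middle_informative (I x /\ ~ Dp x) then Pt j x + corr (aS x) j x else Pt j x.

Lemma Pn_out j x : ~ (I x /\ ~ Dp x) -> Pn0 j x = Pt j x.
Proof. intros H. unfold Pn0. destruct (excluded_middle_informative _); tauto. Qed.

Lemma Pn_seg a x j : segStart a -> segH a x -> Pn0 j x = Pt j x + corr a j x.
Proof.
  intros Hst Hs. unfold Pn0. destruct (excluded_middle_informative _) as [_|Hn'].
  - rewrite (aS_of a x); auto.
  - exfalso; apply Hn'. apply (segH_I a x Hs).
Qed.

Lemma kk_pos a : (exists x, segH a x) -> (1 <= kk a)%nat.
Proof. intros Hex. destruct (blk_spec a Hex) as [H _]. unfold kk. lia. Qed.

Definition inblk a j : bool := ((rlo a <=? j)%nat && (j <=? rhi a)%nat)%bool.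

Lemma inblk_spec a j : inblk a j = true <-> (rlo a <= j <= rhi a)%nat.
Proof. unfold inblk. rewrite Bool.andb_true_iff, !Nat.leb_le. tauto. Qed.

Definition Vd a x0 : R := Pt (rlo a) x0 - (x0 - a) / INR (kk a).

Lemma Pt_block a x0 x j : segH a x0 -> segH a x -> (rlo a <= j <= rhi a)%nat ->
  Pt j x = Vd a x0 + (x - a) / INR (kk a).
Proof.
  intros H0 Hx Hj. assert (Hex : exists x, segH a x) by eauto.
  destruct (blk_spec a Hex) as [Hr [_ [Hb _]]]. destruct (Hb j Hj) as [Heq Hsl].
  pose proof (Hsl x0 x H0 Hx). rewrite (Heq x0 H0) in H.
  assert (Hk : INR (kk a) > 0) by (apply lt_0_INR; unfold kk; lia).
  unfold Vd, kk in *. replace (Pt j x) with (Pt (rlo a) x0 + 1 / INR (rhi a - rlo a + 1) * (x - x0)) by lra.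
  field. lra.
Qed.

Lemma Pt_nonblock a x0 x j : segH a x0 -> segH a x -> (1 <= j <= n)%nat -> ~ (rlo a <= j <= rhi a)%nat ->
  Pt j x = Pt j x0.
Proof.
  intros H0 Hx Hj Hnb. assert (Hex : exists x, segH a x) by eauto.
  destruct (blk_spec a Hex) as [Hr [_ [_ Hc]]]. apply (Hc j Hj Hnb); auto.
Qed.

Definition ww a x : R := (x - a) / dl a (kk a).

Definition Form a x0 t y : Prop := forall j, (1 <= j <= n)%nat ->
  Pn0 j y = if inblk a j then Vd a x0 + dl a (kk a) * Gt (kk a) (j - rlo a) t (ww a y) else Pt j x0.

Lemma seg_Form a x0 t y : segStart a -> segH a x0 -> segH a y -> IZR t <= ww a y <= IZR t + 1 -> Form a x0 t y.
Proof.
  intros Hst H0 Hy Ht j Hj. assert (Hex : exists x, segH a x) by eauto.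
  pose proof (kk_pos a Hex) as Hk. pose proof (dl_spec a (kk a) Hk Hex) as [Hd _].
  assert (Hk0 : INR (kk a) > 0) by (apply lt_0_INR; lia).
  rewrite (Pn_seg a y j Hst Hy). unfold corr. fold (inblk a j).
  destruct (inblk a j) eqn:E.
  - apply inblk_spec in E. rewrite (Pt_block a x0 y j H0 Hy E).
    rewrite (G_seg (kk a) (j - rlo a) t) by (auto; unfold kk; lia).
    unfold ww. field. lra.
  - rewrite (Pt_nonblock a x0 y j H0 Hy Hj); [ring|]. intro C; apply inblk_spec in C; congruence.
Qed.

Lemma kd_shift j rl rh s : (rl <= j)%nat -> (rl <= rh)%nat -> (s < rh - rl + 1)%nat ->
  kd (j - rl) (rh - rl + 1 - 1 - s) = kd j (rh - s).
Proof.
  intros H1 H2. unfold kd. destruct (Nat.eq_dec (j - rl) (rh - rl + 1 - 1 - s)); destruct (Nat.eq_dec j (rh - s)); auto; lia.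
Qed.

Lemma Form_diff a x0 t x y j : (exists z, segH a z) -> Form a x0 t x -> Form a x0 t y -> (1 <= j <= n)%nat ->
  Pn0 j x = Pn0 j y + kd j (rhi a - sm (kk a) t) * (x - y).
Proof.
  intros Hex Fx Fy Hj. rewrite (Fx j Hj), (Fy j Hj).
  pose proof (kk_pos a Hex) as Hk. pose proof (dl_spec a (kk a) Hk Hex) as [Hd _].
  pose proof (sm_lt (kk a) t Hk).
  destruct (inblk a j) eqn:E.
  - apply inblk_spec in E.
    pose proof (Gt_diff (kk a) (j - rlo a) t (ww a x) (ww a y)).
    destruct (blk_spec a Hex) as [Hr _].
    assert (Ek : kd (j - rlo a) (kk a - 1 - sm (kk a) t) = kd j (rhi a - sm (kk a) t)).
    { revert H. unfold kk. intro H. apply kd_shift; lia. }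
    rewrite Ek in H0.
    replace (x - y) with (dl a (kk a) * (ww a x - ww a y)) by (unfold ww; field; lra).
    assert (E2 : Gt (kk a) (j - rlo a) t (ww a x) = Gt (kk a) (j - rlo a) t (ww a y) + kd j (rhi a - sm (kk a) t) * (ww a x - ww a y)) by lra.
    rewrite E2. ring.
  - rewrite kd_neq; [ring|]. intro C. assert (inblk a j = true); [|congruence].
    apply inblk_spec. destruct (blk_spec a Hex) as [Hr _]. unfold kk in H, C. lia.
Qed.

Definition Pn j x : R := if ((1 <=? j)%nat && (j <=? n)%nat)%bool then Pn0 j x else 0.

Lemma Pn_in j x : (1 <= j <= n)%nat -> Pn j x = Pn0 j x.
Proof. intros H. unfold Pn. destruct (Nat.leb_spec 1 j); destruct (Nat.leb_spec j n); simpl; auto; lia. Qed.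

Lemma Pn_ext q r x : (1 <= r <= n)%nat ->
  (forall j, (1 <= j <= n)%nat -> Pn0 j x = Pn0 j q + kd j r * (x - q)) ->
  forall j, Pn j x = Pn j q + kd j r * (x - q).
Proof.
  intros Hr H j. unfold Pn. destruct (Nat.leb_spec 1 j); destruct (Nat.leb_spec j n); simpl.
  - apply H; lia.
  - rewrite kd_neq by lia. ring.
  - rewrite kd_neq by lia. ring.
  - rewrite kd_neq by lia. ring.
Qed.

Lemma idx_range a t : (exists z, segH a z) -> (1 <= rhi a - sm (kk a) t <= n)%nat /\
  (rlo a <= rhi a - sm (kk a) t <= rhi a)%nat.
Proof.
  intros Hex. pose proof (kk_pos a Hex) as Hk. pose proof (sm_lt (kk a) t Hk).
  destruct (blk_spec a Hex) as [Hr [Hrn _]]. unfold kk in *. lia.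
Qed.


Lemma div_le u v d : d > 0 -> u <= d * v -> u / d <= v.
Proof. intros Hd H. apply (Rmult_le_reg_r d); auto. unfold Rdiv. rewrite Rmult_assoc, Rinv_l by lra. lra. Qed.
Lemma div_ge u v d : d > 0 -> d * v <= u -> v <= u / d.
Proof. intros Hd H. apply (Rmult_le_reg_r d); auto. unfold Rdiv. rewrite Rmult_assoc, Rinv_l by lra. lra. Qed.

Lemma Right_in q : I q -> ~ Dp q ->
  RightInd I Pn q (rhi (aS q) - sm (kk (aS q)) (Int_part (ww (aS q) q))).
Proof.
  intros Hq HnD. destruct (aS_start q Hq HnD) as [Hst Hs]. set (a := aS q) in *.
  assert (Hex : exists z, segH a z) by eauto.
  pose proof (kk_pos a Hex) as Hk. pose proof (dl_spec a (kk a) Hk Hex) as [Hd _].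
  set (t := Int_part (ww a q)). pose proof (Int_part_bounds (ww a q)) as Hb. fold t in Hb.
  destruct (segH_open a q Hs) as [d1 [Hd1 Ho]].
  pose proof (Rmin_l d1 (dl a (kk a) * (IZR t + 1 - ww a q))) as He1.
  pose proof (Rmin_r d1 (dl a (kk a) * (IZR t + 1 - ww a q))) as He2.
  set (e := Rmin d1 (dl a (kk a) * (IZR t + 1 - ww a q))) in *.
  assert (He : e > 0) by (apply Rmin_glb_lt; [lra| apply Rmult_lt_0_compat; lra]).
  exists e. split; auto. intros x Hx.
  assert (Hsx : segH a x) by (apply Ho; apply Rabs_def1; lra).
  split; [apply (segH_I a x Hsx)|].
  destruct (idx_range a t Hex) as [Hr _].
  apply Pn_ext; auto. intros j Hj.
  assert (Hwx : IZR t <= ww a x <= IZR t + 1).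
  { assert (Ew : ww a x = ww a q + (x - q) / dl a (kk a)) by (unfold ww; field; lra).
    assert (0 <= (x - q) / dl a (kk a)) by (apply div_ge; lra).
    assert ((x - q) / dl a (kk a) <= IZR t + 1 - ww a q) by (apply div_le; lra).
    lra. }
  apply (Form_diff a q t x q j Hex); auto; apply seg_Form; auto; lra.
Qed.

Lemma Left_in q : I q -> ~ Dp q -> forall t, IZR t < ww (aS q) q <= IZR t + 1 ->
  LeftInd I Pn q (rhi (aS q) - sm (kk (aS q)) t).
Proof.
  intros Hq HnD t Hb. destruct (aS_start q Hq HnD) as [Hst Hs]. set (a := aS q) in *.
  assert (Hex : exists z, segH a z) by eauto.
  pose proof (kk_pos a Hex) as Hk. pose proof (dl_spec a (kk a) Hk Hex) as [Hd _].
  destruct (segH_open a q Hs) as [d1 [Hd1 Ho]].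
  pose proof (Rmin_l d1 (dl a (kk a) * (ww a q - IZR t))) as He1.
  pose proof (Rmin_r d1 (dl a (kk a) * (ww a q - IZR t))) as He2.
  set (e := Rmin d1 (dl a (kk a) * (ww a q - IZR t))) in *.
  assert (He : e > 0) by (apply Rmin_glb_lt; [lra| apply Rmult_lt_0_compat; lra]).
  exists e. split; auto. intros x Hx.
  assert (Hsx : segH a x) by (apply Ho; apply Rabs_def1; lra).
  split; [apply (segH_I a x Hsx)|].
  destruct (idx_range a t Hex) as [Hr _].
  apply Pn_ext; auto. intros j Hj.
  assert (Hwx : IZR t <= ww a x <= IZR t + 1).
  { assert (Ew : ww a x = ww a q + (x - q) / dl a (kk a)) by (unfold ww; field; lra).
    assert ((x - q) / dl a (kk a) <= 0) by (apply div_le; lra).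
    assert (- (ww a q - IZR t) <= (x - q) / dl a (kk a)) by (apply div_ge; lra).
    lra. }
  apply (Form_diff a q t x q j Hex); auto; apply seg_Form; auto; lra.
Qed.

Lemma LeftSeg q : I q -> Dp q -> (exists y, I y /\ y < q) ->
  exists a e, e > 0 /\ segStart a /\ (forall x, q - e < x < q -> segH a x) /\ is_lub (segH a) q.
Proof.
  intros Hq HD [y0 [Hy0 Hy0q]]. destruct (isolate q Hq) as [d0 [Hd0 Hiso]].
  set (e0 := Rmin d0 (q - y0)).
  assert (He0 : e0 > 0) by (apply Rmin_glb_lt; lra).
  pose proof (Rmin_l d0 (q - y0)); pose proof (Rmin_r d0 (q - y0)).
  assert (Hgood : forall x, q - e0 < x < q -> I x /\ ~ Dp x).
  { intros x Hx. assert (I x) by (apply (Iint y0 x q); auto; unfold e0 in *; lra).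
    split; auto. apply Hiso; auto; [apply Rabs_def1; unfold e0 in *; lra| lra]. }
  set (x1 := q - e0 / 2).
  destruct (Hgood x1 ltac:(unfold x1; lra)) as [Hx1 HnD1].
  destruct (aS_start x1 Hx1 HnD1) as [Hst Hs1].
  exists (aS x1), (e0 / 2). split; [lra|split; [auto|split]].
  - intros x Hx. destruct Hs1 as [Ha1 Hs1]. split; [unfold x1 in *; lra|].
    intros z Hz. destruct (Rle_lt_dec z x1); [apply Hs1; lra|]. apply Hgood. unfold x1 in *; lra.
  - split.
    + intros z [Haz Hz]. destruct (Rle_lt_dec z q) as [|Hlt]; auto. exfalso.
      destruct (Hz q); [destruct Hs1; unfold x1 in *; lra|]. contradiction.
    + intros b Hb. destruct (Rle_lt_dec q b) as [|Hlt]; auto. exfalso.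
      pose proof (Rmax_l x1 b); pose proof (Rmax_r x1 b). set (m := Rmax x1 b) in *.
      assert (m < q) by (unfold m; apply Rmax_lub_lt; unfold x1; lra).
      set (x := (m + q) / 2).
      assert (segH (aS x1) x).
      { destruct Hs1 as [Ha1 Hs1]. split; [unfold x, x1 in *; lra|].
        intros z Hz. destruct (Rle_lt_dec z x1); [apply Hs1; lra|]. apply Hgood. unfold x, x1 in *; lra. }
      specialize (Hb x H4). unfold x in Hb. lra.
Qed.

Lemma RightSeg q : I q -> Dp q -> (exists y, I y /\ q < y) ->
  exists e, e > 0 /\ segStart q /\ (forall x, q < x < q + e -> segH q x).
Proof.
  intros Hq HD [y0 [Hy0 Hy0q]]. destruct (isolate q Hq) as [d0 [Hd0 Hiso]].
  set (e0 := Rmin d0 (y0 - q)).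
  assert (He0 : e0 > 0) by (apply Rmin_glb_lt; lra).
  pose proof (Rmin_l d0 (y0 - q)); pose proof (Rmin_r d0 (y0 - q)).
  exists e0. split; [auto|split].
  - intros [_ HnD]; contradiction.
  - intros x Hx. split; [lra|]. intros z Hz.
    assert (I z) by (apply (Iint q z y0); auto; unfold e0 in *; lra).
    split; auto. apply Hiso; auto; [apply Rabs_def1; unfold e0 in *; lra| lra].
Qed.

Lemma lim_aff (f : R -> R) q A c :
  (forall e, e > 0 -> exists x, Rabs (x - q) < e /\ f x = A + c * x /\ Rabs (f x - f q) < e) ->
  f q = A + c * q.
Proof.
  intros H. destruct (Req_dec (f q) (A + c * q)) as [|Hne]; auto. exfalso.
  set (D := Rabs (f q - (A + c * q))).
  assert (HD : D > 0) by (apply Rabs_pos_lt; lra).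
  pose proof (Rabs_pos c).
  set (e := D / (2 * (1 + Rabs c))).
  assert (He : e > 0) by (unfold e; apply Rdiv_lt_0_compat; lra).
  destruct (H e He) as [x [Hx1 [Hx2 Hx3]]].
  assert (D <= Rabs (f q - f x) + Rabs c * Rabs (x - q)).
  { unfold D. replace (f q - (A + c * q)) with ((f q - f x) + c * (x - q)) by (rewrite Hx2; ring).
    rewrite <- Rabs_mult. apply Rabs_triang. }
  rewrite Rabs_minus_sym in H1.
  assert (Rabs c * Rabs (x - q) <= Rabs c * e) by (apply Rmult_le_compat_l; lra).
  assert (e * (2 * (1 + Rabs c)) = D) by (unfold e; field; lra).
  nra.
Qed.

Lemma Pt_cont j q : (1 <= j <= n)%nat -> I q -> forall e, e > 0 -> exists d, d > 0 /\
  forall x, I x -> Rabs (x - q) < d -> Rabs (Pt j x - Pt j q) < e.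
Proof. intros Hj Hq. destruct HG as [[Hc _] _]. apply Hc; auto. Qed.

Lemma lim_left j q A c e : (1 <= j <= n)%nat -> I q -> e > 0 ->
  (forall x, q - e < x < q -> I x /\ Pt j x = A + c * x) -> Pt j q = A + c * q.
Proof.
  intros Hj Hq He H. apply lim_aff. intros e' He'.
  destruct (Pt_cont j q Hj Hq e' He') as [d [Hd Hc]].
  set (m := Rmin e (Rmin d e')).
  assert (0 < Rmin d e') by (apply Rmin_glb_lt; lra).
  assert (Hm : 0 < m) by (apply Rmin_glb_lt; lra).
  pose proof (Rmin_l e (Rmin d e')); pose proof (Rmin_r e (Rmin d e')).
  pose proof (Rmin_l d e'); pose proof (Rmin_r d e').
  exists (q - m / 2). destruct (H (q - m/2) ltac:(unfold m in *; lra)) as [HI' HE].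
  assert (Rabs (q - m / 2 - q) = m / 2) by (replace (q - m/2 - q) with (- (m/2)) by ring; rewrite Rabs_Ropp, Rabs_right; lra).
  split; [unfold m in *; lra|split; auto]. apply Hc; auto. unfold m in *; lra.
Qed.

Lemma lim_right j q A c e : (1 <= j <= n)%nat -> I q -> e > 0 ->
  (forall x, q < x < q + e -> I x /\ Pt j x = A + c * x) -> Pt j q = A + c * q.
Proof.
  intros Hj Hq He H. apply lim_aff. intros e' He'.
  destruct (Pt_cont j q Hj Hq e' He') as [d [Hd Hc]].
  set (m := Rmin e (Rmin d e')).
  assert (0 < Rmin d e') by (apply Rmin_glb_lt; lra).
  assert (Hm : 0 < m) by (apply Rmin_glb_lt; lra).
  pose proof (Rmin_l e (Rmin d e')); pose proof (Rmin_r e (Rmin d e')).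
  pose proof (Rmin_l d e'); pose proof (Rmin_r d e').
  exists (q + m / 2). destruct (H (q + m/2) ltac:(unfold m in *; lra)) as [HI' HE].
  assert (Rabs (q + m / 2 - q) = m / 2) by (replace (q + m/2 - q) with (m/2) by ring; rewrite Rabs_right; lra).
  split; [unfold m in *; lra|split; auto]. apply Hc; auto. unfold m in *; lra.
Qed.

Lemma Left_D q : I q -> Dp q -> (exists y, I y /\ y < q) ->
  exists a, (exists z, segH a z) /\ LeftInd I Pn q (rlo a) /\
  exists e, e > 0 /\ forall x, q - e < x <= q -> forall j, (1 <= j <= n)%nat ->
    Pt j x = Pt j q + (if inblk a j then 1 / INR (kk a) else 0) * (x - q).
Proof.
  intros Hq HD Hy. destruct (LeftSeg q Hq HD Hy) as [a [e [He [Hst [Hseg Hlub]]]]].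
  set (x0 := q - e / 2). assert (Hs0 : segH a x0) by (apply Hseg; unfold x0; lra).
  assert (Hex : exists z, segH a z) by eauto.
  pose proof (kk_pos a Hex) as Hk. destruct (dl_spec a (kk a) Hk Hex) as [Hd [Hdle Hal]].
  destruct (Hal q Hlub) as [N [HN1 HqN]].
  destruct (blk_spec a Hex) as [Hr [Hrn _]].
  assert (Hk0 : INR (kk a) > 0) by (apply lt_0_INR; lia).
  assert (HPtq : forall j, (1 <= j <= n)%nat -> Pt j q =
     if inblk a j then Vd a x0 + (q - a) / INR (kk a) else Pt j x0).
  { intros j Hj. destruct (inblk a j) eqn:E.
    - apply inblk_spec in E.
      replace (Vd a x0 + (q - a) / INR (kk a)) with ((Vd a x0 - a / INR (kk a)) + / INR (kk a) * q) by (field; lra).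
      apply (lim_left j q _ _ e Hj Hq He). intros x Hx. pose proof (Hseg x Hx) as Hsx.
      split; [apply (segH_I a x Hsx)|]. rewrite (Pt_block a x0 x j Hs0 Hsx E). field; lra.
    - replace (Pt j x0) with (Pt j x0 + 0 * q) by ring.
      apply (lim_left j q _ _ e Hj Hq He). intros x Hx. pose proof (Hseg x Hx) as Hsx.
      split; [apply (segH_I a x Hsx)|]. rewrite (Pt_nonblock a x0 x j Hs0 Hsx Hj); [ring|].
      intro C; apply inblk_spec in C; congruence. }
  exists a. split; auto. split.
  - set (e' := Rmin e (dl a (kk a))).
    assert (He' : e' > 0) by (apply Rmin_glb_lt; lra).
    pose proof (Rmin_l e (dl a (kk a))); pose proof (Rmin_r e (dl a (kk a))).
    exists e'. split; auto. intros x Hx.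
    assert (HxI : I x) by (destruct (Req_dec x q); [subst; auto| apply (segH_I a x), Hseg; unfold e' in *; lra]).
    split; auto.
    assert (Hri : (1 <= rlo a <= n)%nat) by lia.
    apply Pn_ext; auto. intros j Hj.
    destruct (Req_dec x q) as [Hxq|Hxq]; [subst; ring|].
    set (tN := (Z.of_nat (kk a) * Z.of_nat N - 1)%Z).
    destruct (Gt_top (kk a) 0 N Hk ltac:(lia) HN1) as [Hsm _].
    assert (Hidx : rlo a = (rhi a - sm (kk a) tN)%nat) by (fold tN in Hsm; rewrite Hsm; unfold kk; lia).
    rewrite Hidx.
    assert (Hwq : ww a q = INR (kk a) * INR N) by (unfold ww; rewrite HqN; field; lra).
    assert (HtN : IZR tN = INR (kk a) * INR N - 1).
    { unfold tN. rewrite minus_IZR, mult_IZR, <- !INR_IZR_INZ. reflexivity. }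
    apply (Form_diff a x0 tN x q j Hex); auto.
    + apply seg_Form; auto. apply Hseg; unfold e' in *; lra.
      assert (Ew : ww a x = ww a q + (x - q) / dl a (kk a)) by (unfold ww; field; lra).
      assert ((x - q) / dl a (kk a) <= 0) by (apply div_le; lra).
      assert (- 1 <= (x - q) / dl a (kk a)) by (apply div_ge; unfold e' in *; lra).
      lra.
    + intros j' Hj'. rewrite Pn_out by (intros [_ C]; contradiction). rewrite (HPtq j' Hj').
      destruct (inblk a j') eqn:E; auto.
      apply inblk_spec in E.
      replace (ww a q) with (IZR tN + 1) by lra.
      rewrite HtN. replace (INR (kk a) * INR N - 1 + 1) with (INR (kk a) * INR N) by ring.
      unfold tN. rewrite (proj2 (Gt_top (kk a) (j' - rlo a) N Hk ltac:(unfold kk; lia) HN1)).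
      rewrite HqN. field; lra.
  - exists e. split; auto. intros x Hx j Hj.
    destruct (Req_dec x q) as [Hxq|Hxq]; [subst; ring|].
    pose proof (Hseg x ltac:(lra)) as Hsx. rewrite (HPtq j Hj).
    destruct (inblk a j) eqn:E.
    + apply inblk_spec in E. rewrite (Pt_block a x0 x j Hs0 Hsx E). field; lra.
    + rewrite (Pt_nonblock a x0 x j Hs0 Hsx Hj); [ring|]. intro C; apply inblk_spec in C; congruence.
Qed.

Lemma Right_D q : I q -> Dp q -> (exists y, I y /\ q < y) ->
  (exists z, segH q z) /\ RightInd I Pn q (rhi q) /\
  exists e, e > 0 /\ forall x, q <= x < q + e -> forall j, (1 <= j <= n)%nat ->
    Pt j x = Pt j q + (if inblk q j then 1 / INR (kk q) else 0) * (x - q).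
Proof.
  intros Hq HD Hy. destruct (RightSeg q Hq HD Hy) as [e [He [Hst Hseg]]].
  set (x0 := q + e / 2). assert (Hs0 : segH q x0) by (apply Hseg; unfold x0; lra).
  assert (Hex : exists z, segH q z) by eauto.
  pose proof (kk_pos q Hex) as Hk. destruct (dl_spec q (kk q) Hk Hex) as [Hd [Hdle Hal]].
  destruct (blk_spec q Hex) as [Hr [Hrn _]].
  assert (Hk0 : INR (kk q) > 0) by (apply lt_0_INR; lia).
  assert (HPtq : forall j, (1 <= j <= n)%nat -> Pt j q =
     if inblk q j then Vd q x0 + (q - q) / INR (kk q) else Pt j x0).
  { intros j Hj. destruct (inblk q j) eqn:E.
    - apply inblk_spec in E.
      replace (Vd q x0 + (q - q) / INR (kk q)) with ((Vd q x0 - q / INR (kk q)) + / INR (kk q) * q) by (field; lra).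
      apply (lim_right j q _ _ e Hj Hq He). intros x Hx. pose proof (Hseg x Hx) as Hsx.
      split; [apply (segH_I q x Hsx)|]. rewrite (Pt_block q x0 x j Hs0 Hsx E). field; lra.
    - replace (Pt j x0) with (Pt j x0 + 0 * q) by ring.
      apply (lim_right j q _ _ e Hj Hq He). intros x Hx. pose proof (Hseg x Hx) as Hsx.
      split; [apply (segH_I q x Hsx)|]. rewrite (Pt_nonblock q x0 x j Hs0 Hsx Hj); [ring|].
      intro C; apply inblk_spec in C; congruence. }
  split; auto. split.
  - set (e' := Rmin e (dl q (kk q))).
    assert (He' : e' > 0) by (apply Rmin_glb_lt; lra).
    pose proof (Rmin_l e (dl q (kk q))); pose proof (Rmin_r e (dl q (kk q))).
    exists e'. split; auto. intros x Hx.
    assert (HxI : I x) by (destruct (Req_dec x q); [subst; auto| apply (segH_I q x), Hseg; unfold e' in *; lra]).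
    split; auto.
    assert (Hri : (1 <= rhi q <= n)%nat) by lia.
    apply Pn_ext; auto. intros j Hj.
    destruct (Req_dec x q) as [Hxq|Hxq]; [subst; ring|].
    assert (Hsm : sm (kk q) 0 = 0%nat) by (unfold sm; rewrite Zmod_0_l; reflexivity).
    replace (rhi q) with (rhi q - sm (kk q) 0)%nat by (rewrite Hsm; lia).
    assert (Hwq : ww q q = 0) by (unfold ww; field; lra).
    apply (Form_diff q x0 0 x q j Hex); auto.
    + apply seg_Form; auto. apply Hseg; unfold e' in *; lra.
      assert (Ew : ww q x = ww q q + (x - q) / dl q (kk q)) by (unfold ww; field; lra).
      assert (0 <= (x - q) / dl q (kk q)) by (apply div_ge; lra).
      assert ((x - q) / dl q (kk q) <= 1) by (apply div_le; unfold e' in *; lra).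
      simpl. lra.
    + intros j' Hj'. rewrite Pn_out by (intros [_ C]; contradiction). rewrite (HPtq j' Hj').
      destruct (inblk q j') eqn:E; auto.
      apply inblk_spec in E. rewrite Hwq, Gt_00 by (auto; unfold kk; lia).
      field; lra.
  - exists e. split; auto. intros x Hx j Hj.
    destruct (Req_dec x q) as [Hxq|Hxq]; [subst; ring|].
    pose proof (Hseg x ltac:(lra)) as Hsx. rewrite (HPtq j Hj).
    destruct (inblk q j) eqn:E.
    + apply inblk_spec in E. rewrite (Pt_block q x0 x j Hs0 Hsx E). field; lra.
    + rewrite (Pt_nonblock q x0 x j Hs0 Hsx Hj); [ring|]. intro C; apply inblk_spec in C; congruence.
Qed.

Lemma HL_all q : I q -> (exists x, I x /\ x < q) -> exists r, (1 <= r <= n)%nat /\ LeftInd I Pn q r.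
Proof.
  intros Hq Hl. destruct (classic (Dp q)) as [HD|HnD].
  - destruct (Left_D q Hq HD Hl) as [a [Hex [HLi _]]]. exists (rlo a). split; auto.
    destruct (blk_spec a Hex) as [Hr [Hrn _]]. lia.
  - destruct (aS_start q Hq HnD) as [Hst Hs].
    assert (Hex : exists z, segH (aS q) z) by eauto.
    set (t := Int_part (ww (aS q) q)). pose proof (Int_part_bounds (ww (aS q) q)) as Hb. fold t in Hb.
    destruct (Rle_lt_or_eq_dec _ _ (proj1 Hb)) as [Hlt|Heq].
    + exists (rhi (aS q) - sm (kk (aS q)) t)%nat. split; [apply (idx_range _ t Hex)|].
      apply Left_in; auto; lra.
    + exists (rhi (aS q) - sm (kk (aS q)) (t - 1))%nat. split; [apply (idx_range _ (t-1) Hex)|].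
      apply Left_in; auto. rewrite minus_IZR. simpl (IZR 1). lra.
Qed.

Lemma HR_all q : I q -> (exists x, I x /\ q < x) -> exists r, (1 <= r <= n)%nat /\ RightInd I Pn q r.
Proof.
  intros Hq Hr'. destruct (classic (Dp q)) as [HD|HnD].
  - destruct (Right_D q Hq HD Hr') as [Hex [HRi _]]. exists (rhi q). split; auto.
    destruct (blk_spec q Hex) as [Hr [Hrn _]]. lia.
  - destruct (aS_start q Hq HnD) as [Hst Hs].
    assert (Hex : exists z, segH (aS q) z) by eauto.
    exists (rhi (aS q) - sm (kk (aS q)) (Int_part (ww (aS q) q)))%nat.
    split; [apply (idx_range _ _ Hex)|]. apply Right_in; auto.
Qed.

Lemma HC_all q r s : I q -> LeftInd I Pn q r -> RightInd I Pn q s -> (r < s)%nat ->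
  forall j, (r <= j <= s)%nat -> Pn j q = Pn r q.
Proof.
  intros Hq HLi HRi Hrs j Hj.
  assert (Wl : exists x, I x /\ x < q).
  { destruct HLi as [d [Hd H]]. exists (q - d/2). split; [apply H; lra|lra]. }
  assert (Wr : exists x, I x /\ q < x).
  { destruct HRi as [d [Hd H]]. exists (q + d/2). split; [apply H; lra|lra]. }
  destruct (classic (Dp q)) as [HD|HnD].
  - destruct (Left_D q Hq HD Wl) as [a [Hexa [HLa [eL [HeL HaffL]]]]].
    destruct (Right_D q Hq HD Wr) as [Hexq [HRq [eR [HeR HaffR]]]].
    assert (r = rlo a) by (eapply LeftInd_uniq; eauto). assert (s = rhi q) by (eapply RightInd_uniq; eauto).
    subst r s.
    destruct (blk_spec a Hexa) as [Hra [Hrna _]]. destruct (blk_spec q Hexq) as [Hrq [Hrnq _]].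
    assert (Hint : interior_pt I q).
    { destruct HLi as [d1 [Hd1 H1]]. destruct HRi as [d2 [Hd2 H2]].
      exists (Rmin d1 d2). split. apply Rmin_glb_lt; lra.
      intros x Hx. apply Rabs_def2 in Hx. pose proof (Rmin_l d1 d2); pose proof (Rmin_r d1 d2).
      destruct (Rle_lt_dec x q); [apply H1; lra| apply H2; lra]. }
    assert (Hnd : ~ diff_at n Pt q).
    { destruct HD as [_ [C|C]]; [contradiction|auto]. }
    destruct HG as [_ [_ [_ HG3]]].
    assert (E : forall j', (rlo a <= j' <= rhi q)%nat -> Pt j' q = Pt (rlo a) q).
    { apply (HG3 q Hint Hnd (rlo a) (rhi a) (rlo q) (rhi q)); try lia.
      - intros j' Hj'. apply (affine_left_deriv _ _ _ eL HeL). intros y Hy.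
        rewrite (HaffL y Hy j' ltac:(lia)). assert (inblk a j' = true) by (apply inblk_spec; lia).
        rewrite H. unfold kk. reflexivity.
      - intros j' Hj' Hn'. apply (affine_left_deriv _ _ _ eL HeL). intros y Hy.
        rewrite (HaffL y Hy j' Hj'). assert (inblk a j' = false).
        { destruct (inblk a j') eqn:E'; auto. apply inblk_spec in E'. tauto. }
        rewrite H. ring.
      - intros j' Hj'. apply (affine_right_deriv _ _ _ eR HeR). intros y Hy.
        rewrite (HaffR y Hy j' ltac:(lia)). assert (inblk q j' = true) by (apply inblk_spec; lia).
        rewrite H. unfold kk. reflexivity.
      - intros j' Hj' Hn'. apply (affine_right_deriv _ _ _ eR HeR). intros y Hy.
        rewrite (HaffR y Hy j' Hj'). assert (inblk q j' = false).
        { destruct (inblk q j') eqn:E'; auto. apply inblk_spec in E'. tauto. }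
        rewrite H. ring. }
    rewrite !Pn_in by lia. rewrite !Pn_out by (intros [_ C]; contradiction). apply E; lia.
  - destruct (aS_start q Hq HnD) as [Hst Hs]. set (a := aS q) in *.
    assert (Hex : exists z, segH a z) by eauto.
    pose proof (kk_pos a Hex) as Hk. destruct (blk_spec a Hex) as [Hr [Hrn _]].
    set (t := Int_part (ww a q)). pose proof (Int_part_bounds (ww a q)) as Hb. fold t in Hb.
    pose proof (sm_lt (kk a) t Hk) as Hsm.
    assert (s = rhi a - sm (kk a) t)%nat by (eapply RightInd_uniq; [eauto| apply Right_in; auto]).
    subst s.
    destruct (Rle_lt_or_eq_dec _ _ (proj1 Hb)) as [Hlt|Heq].
    + assert (r = rhi a - sm (kk a) t)%nat.
      { eapply LeftInd_uniq; [eauto| apply Left_in; auto]. fold a. lra. }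
      unfold t in *; lia.
    + assert (r = rhi a - sm (kk a) (t - 1))%nat.
      { eapply LeftInd_uniq; [eauto| apply Left_in; auto]. fold a. rewrite minus_IZR. simpl (IZR 1). lra. }
      subst r. destruct (sm_pred (kk a) t Hk) as [P1 P2].
      destruct (Nat.eq_dec (sm (kk a) t) 0) as [Z0|Z0].
      * rewrite (P1 Z0) in *. rewrite Z0 in *.
        assert (Hrl : (rhi a - (kk a - 1))%nat = rlo a) by (unfold kk; lia). rewrite Hrl in *.
        assert (HF : Form a q t q) by (apply seg_Form; auto; lra).
        assert (Hall : forall j', (rlo a <= j' <= rhi a)%nat -> Pn j' q = Vd a q + dl a (kk a) * IZR (t / Z.of_nat (kk a))).
        { intros j' Hj'. rewrite Pn_in by lia. rewrite (HF j' ltac:(lia)).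
          assert (inblk a j' = true) by (apply inblk_spec; lia). rewrite H.
          rewrite <- Heq. rewrite Gt_at_zero; auto. unfold kk in *; lia. }
        rewrite (Hall j) by lia. rewrite (Hall (rlo a)) by lia. reflexivity.
      * rewrite (P2 ltac:(lia)) in Hrs. unfold kk in *. lia.
Qed.

Lemma low_lim a c V k : (exists x0, segH a x0) -> k > 0 ->
  (forall x, segH a x -> c <= V + (x - a) / k) -> c <= V.
Proof.
  intros [x0 Hx0] Hk H. destruct (Rle_lt_dec c V) as [|Hlt]; auto. exfalso.
  assert (Ha : a < x0) by (destruct Hx0; lra).
  pose proof (Rmin_l (x0 - a) (k * (c - V) / 2)); pose proof (Rmin_r (x0 - a) (k * (c - V) / 2)).
  set (m := Rmin (x0 - a) (k * (c - V) / 2)) in *.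
  assert (Hm : m > 0) by (apply Rmin_glb_lt; [lra| apply Rdiv_lt_0_compat; nra]).
  specialize (H (a + m) (segH_down a x0 (a + m) Hx0 ltac:(lra))).
  replace (a + m - a) with m in H by ring.
  assert (m / k <= (c - V) / 2) by (apply div_le; lra). lra.
Qed.

Lemma high_lim a c V k : k > 0 -> (exists x0, segH a x0) ->
  (forall x, segH a x -> V + (x - a) / k <= c) ->
  exists b, is_lub (segH a) b /\ V + (b - a) / k <= c.
Proof.
  intros Hk [x0 Hx0] H.
  assert (Hbd : bound (segH a)).
  { exists (a + k * (c - V)). intros x Hx. specialize (H x Hx).
    assert ((x - a) / k * k = x - a) by (field; lra). nra. }
  destruct (completeness (segH a) Hbd ltac:(eauto)) as [b Hb]. exists b. split; auto.
  destruct (Rle_lt_dec (V + (b - a) / k) c) as [|Hlt]; auto. exfalso.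
  destruct Hb as [Hub Hlub].
  assert (Hab : a < b) by (specialize (Hub x0 Hx0); destruct Hx0; lra).
  pose proof (Rmax_l a (b - k * (V + (b - a) / k - c) / 2)); pose proof (Rmax_r a (b - k * (V + (b - a) / k - c) / 2)).
  set (m := Rmax a (b - k * (V + (b - a) / k - c) / 2)) in *.
  assert (Hmb : m < b) by (apply Rmax_lub_lt; [lra| assert (k * (V + (b - a) / k - c) > 0) by nra; lra]).
  set (x := (m + b) / 2).
  destruct (classic (exists z, segH a z /\ x < z)) as [[z [Hz Hxz]]|Hn'].
  - assert (Hsx : segH a x) by (apply (segH_down a z); auto; unfold x in *; lra).
    specialize (H x Hsx).
    assert ((x - a) / k = (b - a) / k - (b - x) / k) by (field; lra).
    assert ((b - x) / k <= (V + (b - a) / k - c) / 2) by (apply div_le; unfold x; lra). lra.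
  - assert (b <= x); [|unfold x in *; lra]. apply Hlub. intros z Hz.
    destruct (Rle_lt_dec z x); auto. exfalso; eauto.
Qed.

Lemma Pn0_clean a q j : segStart a -> segH a q -> (1 <= j <= n)%nat ->
  Pn0 j q = if inblk a j then Vd a q + dl a (kk a) * G (kk a) (j - rlo a) (ww a q) else Pt j q.
Proof.
  intros Hst Hs Hj. assert (Hex : exists z, segH a z) by eauto.
  pose proof (kk_pos a Hex) as Hk. pose proof (dl_spec a (kk a) Hk Hex) as [Hd _].
  assert (Hk0 : INR (kk a) > 0) by (apply lt_0_INR; lia).
  rewrite (Pn_seg a q j Hst Hs). unfold corr. fold (inblk a j).
  destruct (inblk a j) eqn:E; [|ring].
  apply inblk_spec in E. rewrite (Pt_block a q q j Hs Hs E). unfold ww. field. lra.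
Qed.

Lemma sum_ext1 n' (f g : nat -> R) : (1 <= n')%nat -> (forall j, (1 <= j <= n')%nat -> f j = g j) -> sum_f 1 n' f = sum_f 1 n' g.
Proof. intros H0 H. unfold sum_f. apply sum_eq. intros i Hi. apply H. lia. Qed.

Lemma cond1_Pn : cond1 n I Pn.
Proof.
  intros q Hq. destruct HG as [_ [Hc1 _]]. destruct (Hc1 q Hq) as [Pt0 [Ptmono Ptsum]].
  destruct (classic (Dp q)) as [HD|HnD].
  - assert (E : forall j, (1 <= j <= n)%nat -> Pn j q = Pt j q).
    { intros j Hj. rewrite Pn_in by auto. apply Pn_out. intros [_ C]; contradiction. }
    split; [rewrite E by lia; auto|split].
    + intros j Hj. rewrite !E by lia. apply Ptmono; auto.
    + rewrite (sum_ext1 n _ (fun j => Pt j q)); auto; lia.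
  - destruct (aS_start q Hq HnD) as [Hst Hs]. set (a := aS q) in *.
    assert (Hex : exists z, segH a z) by eauto.
    pose proof (kk_pos a Hex) as Hk. destruct (dl_spec a (kk a) Hk Hex) as [Hd [Hdle Hal]].
    destruct (blk_spec a Hex) as [Hr [Hrn [_ Hconst]]].
    assert (Hk0 : INR (kk a) > 0) by (apply lt_0_INR; lia).
    assert (E : forall j, (1 <= j <= n)%nat -> Pn j q =
      if inblk a j then Vd a q + dl a (kk a) * G (kk a) (j - rlo a) (ww a q) else Pt j q).
    { intros j Hj. rewrite Pn_in by auto. apply Pn0_clean; auto. }
    assert (Hw0 : 0 <= ww a q) by (unfold ww; apply div_ge; destruct Hs; lra).
    assert (Hseg_blk : forall x, segH a x -> Pt (rlo a) x = Vd a q + (x - a) / INR (kk a)).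
    { intros x Hx. apply (Pt_block a q x); auto; lia. }
    assert (Hnb : forall j x, segH a x -> (1 <= j <= n)%nat -> ~ (rlo a <= j <= rhi a)%nat -> Pt j x = Pt j q).
    { intros j x Hx Hj Hn'. apply (Pt_nonblock a q x j Hs Hx Hj Hn'). }
    assert (Gnn : forall j, (rlo a <= j <= rhi a)%nat -> 0 <= G (kk a) (j - rlo a) (ww a q)).
    { intros j Hj. apply G_nonneg; auto. unfold kk; lia. }
    assert (Vlow : (2 <= rlo a)%nat -> Pt (rlo a - 1) q <= Vd a q).
    { intros H2. apply (low_lim a _ _ (INR (kk a)) Hex Hk0). intros x Hx.
      rewrite <- (Hnb (rlo a - 1)%nat x Hx ltac:(lia) ltac:(lia)). rewrite <- Hseg_blk by auto.
      destruct (segH_I a x Hx) as [HIx _]. destruct (Hc1 x HIx) as [_ [Hm _]].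
      specialize (Hm (rlo a - 1)%nat ltac:(lia)). replace (S (rlo a - 1)) with (rlo a) in Hm by lia. auto. }
    assert (V0 : rlo a = 1%nat -> 0 <= Vd a q).
    { intros H1. apply (low_lim a _ _ (INR (kk a)) Hex Hk0). intros x Hx.
      rewrite <- Hseg_blk by auto. rewrite H1.
      destruct (segH_I a x Hx) as [HIx _]. destruct (Hc1 x HIx) as [Hp _]. auto. }
    assert (Vhigh : (rhi a < n)%nat -> G (kk a) (rhi a - rlo a) (ww a q) * dl a (kk a) + Vd a q <= Pt (rhi a + 1) q).
    { intros H2. destruct (high_lim a (Pt (rhi a + 1) q) (Vd a q) (INR (kk a)) Hk0 Hex) as [b [Hb Hvb]].
      - intros x Hx. rewrite <- (Hnb (rhi a + 1)%nat x Hx ltac:(lia) ltac:(lia)). rewrite <- Hseg_blk by auto.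
        destruct (segH_I a x Hx) as [HIx _]. destruct (Hc1 x HIx) as [_ [Hm _]].
        specialize (Hm (rhi a) ltac:(lia)). replace (S (rhi a)) with (rhi a + 1)%nat in Hm by lia.
        assert (Pt (rhi a) x = Pt (rlo a) x) by (apply (proj1 (proj1 (proj2 (proj2 (blk_spec a Hex))) (rhi a) ltac:(lia))); auto).
        lra.
      - destruct (Hal b Hb) as [N [HN1 HbN]].
        assert (Hqb : q < b).
        { destruct (segH_open a q Hs) as [d [Hd' Ho]].
          assert (segH a (q + d/2)) by (apply Ho; apply Rabs_def1; lra).
          destruct Hb as [Hub _]. specialize (Hub _ H). lra. }
        assert (Hwl : ww a q < INR (kk a) * INR N).
        { unfold ww. replace (INR (kk a) * INR N) with ((b - a) / dl a (kk a)) by (rewrite HbN; field; lra).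
          unfold Rdiv. apply Rmult_lt_compat_r; [apply Rinv_0_lt_compat; lra| lra]. }
        pose proof (G_le_N (kk a) (rhi a - rlo a) (ww a q) N Hk ltac:(unfold kk; lia) Hwl).
        assert ((b - a) / INR (kk a) = INR N * dl a (kk a)) by (rewrite HbN; field; lra).
        nra. }
    split; [|split].
    + rewrite E by lia. destruct (inblk a 1) eqn:E1.
      * apply inblk_spec in E1. assert (rlo a = 1%nat) by lia. specialize (V0 H).
        specialize (Gnn 1%nat E1). nra.
      * lia || (apply Pt0).
    + intros j Hj. rewrite !E by lia.
      destruct (inblk a j) eqn:Ej; destruct (inblk a (S j)) eqn:Ej1.
      * apply inblk_spec in Ej; apply inblk_spec in Ej1.
        replace (S j - rlo a)%nat with (j - rlo a + 1)%nat by lia.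
        assert (G (kk a) (j - rlo a) (ww a q) <= G (kk a) (j - rlo a + 1) (ww a q)) by (apply G_mono; auto; unfold kk; lia).
        nra.
      * apply inblk_spec in Ej. assert (j = rhi a).
        { destruct (Nat.eq_dec j (rhi a)); auto. exfalso. assert (inblk a (S j) = true) by (apply inblk_spec; lia). congruence. }
        subst j. replace (S (rhi a)) with (rhi a + 1)%nat by lia. specialize (Vhigh ltac:(lia)). nra.
      * apply inblk_spec in Ej1. assert (S j = rlo a).
        { destruct (Nat.eq_dec (S j) (rlo a)); auto. exfalso. assert (inblk a j = true) by (apply inblk_spec; lia). congruence. }
        specialize (Vlow ltac:(lia)). replace (rlo a - 1)%nat with j in Vlow by lia.
        specialize (Gnn (S j) Ej1). nra.
      * apply Ptmono; auto.
    + rewrite (sum_ext1 n _ (fun j => Pt j q + corr a j q)).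
      2:{ lia. }
      2:{ intros j Hj. rewrite Pn_in by auto. apply Pn_seg; auto. }
      unfold sum_f. rewrite sum_plus. fold (sum_f 1 n (fun j => Pt j q)). rewrite Ptsum.
      fold (sum_f 1 n (fun j => corr a j q)). unfold corr.
      rewrite (sum_block n (rlo a) (rhi a) (fun p => dl a (kk a) * (G (kk a) p ((q - a) / dl a (kk a)) - (q - a) / dl a (kk a) / INR (kk a)))) by lia.
      rewrite sum_scal_minus. replace (rhi a - rlo a)%nat with (kk a - 1)%nat by (unfold kk; lia).
      rewrite G_sum by auto. replace (S (kk a - 1)) with (kk a) by lia. field. lra.
Qed.

Lemma err_Pn q j : I q -> (1 <= j <= n)%nat -> Rabs (Pt j q - Pn j q) <= eps.
Proof.
  intros Hq Hj. rewrite Pn_in by auto. destruct (classic (Dp q)) as [HD|HnD].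
  - rewrite Pn_out by (intros [_ C]; contradiction). replace (Pt j q - Pt j q) with 0 by ring.
    rewrite Rabs_R0; lra.
  - destruct (aS_start q Hq HnD) as [Hst Hs]. set (a := aS q) in *.
    assert (Hex : exists z, segH a z) by eauto.
    pose proof (kk_pos a Hex) as Hk. destruct (dl_spec a (kk a) Hk Hex) as [Hd [Hdle Hal]].
    rewrite (Pn_seg a q j Hst Hs). unfold corr.
    destruct (((rlo a <=? j)%nat && (j <=? rhi a)%nat)%bool).
    + replace (Pt j q - (Pt j q + dl a (kk a) * (G (kk a) (j - rlo a) ((q - a) / dl a (kk a)) - (q - a) / dl a (kk a) / INR (kk a))))
        with (- (dl a (kk a) * (G (kk a) (j - rlo a) ((q - a) / dl a (kk a)) - (q - a) / dl a (kk a) / INR (kk a)))) by ring.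
      rewrite Rabs_Ropp, Rabs_mult, (Rabs_right (dl a (kk a))) by lra.
      pose proof (G_approx (kk a) (j - rlo a) ((q - a) / dl a (kk a)) Hk). nra.
    + replace (Pt j q - (Pt j q + 0)) with 0 by ring. rewrite Rabs_R0; lra.
Qed.

Lemma main_constr : exists P, n_system n I P /\
  forall q, I q -> forall j, (1 <= j <= n)%nat -> Rabs (Pt j q - P j q) <= eps.
Proof.
  exists Pn. split.
  - apply n_system_of_LTA; [lia| apply cond1_Pn | apply HL_all | apply HR_all | apply HC_all].
  - intros q Hq j Hj. apply err_Pn; auto.
Qed.

End Constr.


Theorem mainTheorem6 (n : nat) (I : R -> Prop) (Pt : nat -> R -> R) (eps : R) :
  (2 <= n)%nat ->
  admissible_interval I ->
  gen_n_system n I Pt ->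
  eps > 0 ->
  exists P : nat -> R -> R,
    n_system n I P /\
    forall q, I q -> forall j, (1 <= j <= n)%nat -> Rabs (Pt j q - P j q) <= eps.
Proof.
  intros Hn HI HG Heps. exact (main_constr n I Pt eps Hn HI HG Heps).
Qed.
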